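(* Let $\Phi$ be the one-hidden-layer objective and $G^\Phi$ the associated map. Set $\rho_x=\max_{i\in[n]}\|x^i\|_{p_u'}$, $C_w=\rho_w\Psi^\alpha_{p_w',p_u}(\mathbf{1},\rho_u\rho_x)$ and $C_u=\rho_w\Psi^\alpha_{p_w',p_u}(\alpha,\rho_u\rho_x)$. Let $$A=2\,\mathrm{diag}(p_w'-1,\dots,p_w'-1,p_u'-1)\begin{pmatrix}2C_w\mathbf{1}\mathbf{1}^T & (2C_u+\|\alpha\|_\infty)\mathbf{1}\\ (2C_w+1)\mathbf{1}^T & 2C_u+\|\alpha\|_\infty-1\end{pmatrix}\in\mathbb{R}^{(K+1)\times(K+1)},$$ with $\mathbf{1}\in\mathbb{R}^K$ the all-ones vector. Then for $F=G^\Phi$, for all $i,k\in[K]$, $j,a\in[n_1]$, $b\in[d]$ and $(w,u)\in B_{++}$: $$\langle|\nabla_{w_k}F_{w_{i,j}}|,w_k\rangle\le A_{i,k}F_{w_{i,j}},\ \langle|\nabla_u F_{w_{i,j}}|,u\rangle\le A_{i,K+1}F_{w_{i,j}},\ \langle|\nabla_{w_k}F_{u_{ab}}|,w_k\rangle\le A_{K+1,k}F_{u_{ab}},\ \langle|\nabla_u F_{u_{ab}}|,u\rangle\le A_{K+1,K+1}F_{u_{ab}}.$$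
   Context: Setting: data $(x^i,y_i)\in\mathbb{R}^d_+\times[K]$, $i\in[n]$; $w\in\mathbb{R}^{K\times n_1}_+$ with rows $w_1,\dots,w_K$, $u\in\mathbb{R}^{n_1\times d}_+$; $\alpha\in\mathbb{R}^{n_1}$ with $\alpha_l\ge1$; $f_r(w,u)(x)=\sum_{l=1}^{n_1}w_{r,l}(\sum_{m=1}^d u_{lm}x_m)^{\alpha_l}$; $L(y,f(x))=-f_y(x)+\log\sum_{j}e^{f_j(x)}$; for $\epsilon>0$, $\Phi(w,u)=\frac1n\sum_i[-L(y_i,f(w,u)(x^i))+\sum_r f_r(w,u)(x^i)]+\epsilon(\sum_{r,l}w_{r,l}+\sum_{l,m}u_{lm})$. Given $p_w,p_u\in(1,\infty)$, $\rho_w,\rho_u>0$: $B_{++}=\{(w,u)\in\mathbb{R}^{K\times n_1}_{++}\times\mathbb{R}^{n_1\times d}_{++}:\|u\|_{p_u}\le\rho_u,\ \|w_i\|_{p_w}\le\rho_w\ \forall i\}$ (entrywise norms). $p'=p/(p-1)$, $\psi_p(z)=\operatorname{sign}(z)|z|^{p-1}$ componentwise, and $G^{\Phi}(w,u)=\big(\tfrac{\rho_w\psi_{p_w'}(\nabla_{w_1}\Phi)}{\|\psi_{p_w'}(\nabla_{w_1}\Phi)\|_{p_w}},\dots,\tfrac{\rho_w\psi_{p_w'}(\nabla_{w_K}\Phi)}{\|\psi_{p_w'}(\nabla_{w_K}\Phi)\|_{p_w}},\tfrac{\rho_u\psi_{p_u'}(\nabla_u\Phi)}{\|\psi_{p_u'}(\nabla_u\Phi)\|_{p_u}}\big)(w,u)$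 with components $F_{w_{i,j}},F_{u_{ab}}$. $\Psi^\alpha_{p,q}(\delta,t)=\big([\sum_{l\in J}(\delta_lt^{\alpha_l})^{pq/(q-\bar\alpha p)}]^{1-\bar\alpha p/q}+\max_{j\in J^c}(\delta_jt^{\alpha_j})^p\big)^{1/p}$ with $J=\{l:\alpha_lp<q\}$, $J^c=\{l:\alpha_lp\ge q\}$, $\bar\alpha=\min_{l\in J}\alpha_l$, empty sums/maxima $=0$; $\mathbf{1}$ in $\Psi^\alpha(\mathbf{1},\cdot)$ is the all-ones vector of $\mathbb{R}^{n_1}$. $|\cdot|$ entrywise absolute value, $\langle\cdot,\cdot\rangle$ Frobenius inner product. *)

(* Defs.v *)
From Stdlib Require Import Reals Lra ClassicalEpsilon.
Open Scope R_scope.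

(* Indices are 0-based naturals: [N] = {0,...,N-1}. *)
Fixpoint rsum (N : nat) (f : nat -> R) : R :=
  match N with O => 0 | S N' => rsum N' f + f N' end.

Fixpoint omax (N : nat) (P : nat -> bool) (f : nat -> R) : option R :=
  match N with
  | O => None
  | S N' => let r := omax N' P f in
      if P N' then match r with None => Some (f N') | Some m => Some (Rmax m (f N')) end
      else r
  end.

Fixpoint omin (N : nat) (P : nat -> bool) (f : nat -> R) : option R :=
  match N with
  | O => None
  | S N' => let r := omin N' P f in
      if P N' then match r with None => Some (f N') | Some m => Some (Rmin m (f N')) end
      else r
  end.

Definition odflt0 (o : option R) : R := match o with None => 0 | Some v => v end.

(* real power z^a for z >= 0, with 0^a = 0 (used only with a > 0) *)
Definition rpow (z a : R) : R := if Req_EM_T z 0 then 0 else Rpower z a.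

Definition rsign (z : R) : R :=
  if Rlt_dec 0 z then 1 else if Rlt_dec z 0 then -1 else 0.

Definition conj (p : R) : R := p / (p - 1).

Definition psi (p z : R) : R := rsign z * rpow (Rabs z) (p - 1).

Definition pnorm_vec (N : nat) (p : R) (v : nat -> R) : R :=
  rpow (rsum N (fun l => rpow (Rabs (v l)) p)) (/ p).
Definition pnorm_mat (N M : nat) (p : R) (v : nat -> nat -> R) : R :=
  rpow (rsum N (fun l => rsum M (fun m => rpow (Rabs (v l m)) p))) (/ p).

Definition Deriv (g : R -> R) (x : R) : R :=
  epsilon (inhabits 0) (fun l => derivable_pt_lim g x l).

Definition upd2 (w : nat -> nat -> R) (k l : nat) (t : R) : nat -> nat -> R :=
  fun r m => if andb (Nat.eqb r k) (Nat.eqb m l) then t else w r m.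

Definition fr (n1 d : nat) (alpha : nat -> R) (w u : nat -> nat -> R) (r : nat)
  (xi : nat -> R) : R :=
  rsum n1 (fun l => w r l * rpow (rsum d (fun m => u l m * xi m)) (alpha l)).

Definition lossL (K : nat) (yv : nat) (fv : nat -> R) : R :=
  - fv yv + ln (rsum K (fun j => exp (fv j))).

Definition Phi (n K n1 d : nat) (x : nat -> nat -> R) (y : nat -> nat)
  (alpha : nat -> R) (eps : R) (w u : nat -> nat -> R) : R :=
  / INR n * rsum n (fun i =>
      - lossL K (y i) (fun r => fr n1 d alpha w u r (x i))
      + rsum K (fun r => fr n1 d alpha w u r (x i)))
  + eps * (rsum K (fun r => rsum n1 (fun l => w r l))
           + rsum n1 (fun l => rsum d (fun m => u l m))).

Definition gradW (Ph : (nat -> nat -> R) -> (nat -> nat -> R) -> R)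
  (r l : nat) (w u : nat -> nat -> R) : R :=
  Deriv (fun t => Ph (upd2 w r l t) u) (w r l).
Definition gradU (Ph : (nat -> nat -> R) -> (nat -> nat -> R) -> R)
  (l m : nat) (w u : nat -> nat -> R) : R :=
  Deriv (fun t => Ph w (upd2 u l m t)) (u l m).

Definition GW (Ph : (nat -> nat -> R) -> (nat -> nat -> R) -> R) (n1 : nat)
  (pw rhow : R) (i j : nat) (w u : nat -> nat -> R) : R :=
  rhow * psi (conj pw) (gradW Ph i j w u)
  / pnorm_vec n1 pw (fun l => psi (conj pw) (gradW Ph i l w u)).
Definition GU (Ph : (nat -> nat -> R) -> (nat -> nat -> R) -> R) (n1 d : nat)
  (pu rhou : R) (a b : nat) (w u : nat -> nat -> R) : R :=
  rhou * psi (conj pu) (gradU Ph a b w u)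
  / pnorm_mat n1 d pu (fun l m => psi (conj pu) (gradU Ph l m w u)).

Definition inBpp (K n1 d : nat) (pw pu rhow rhou : R) (w u : nat -> nat -> R) : Prop :=
  (forall r l, (r < K)%nat -> (l < n1)%nat -> 0 < w r l) /\
  (forall l m, (l < n1)%nat -> (m < d)%nat -> 0 < u l m) /\
  pnorm_mat n1 d pu u <= rhou /\
  (forall r, (r < K)%nat -> pnorm_vec n1 pw (w r) <= rhow).

Definition inJ (alpha : nat -> R) (p q : R) (l : nat) : bool :=
  if Rlt_dec (alpha l * p) q then true else false.
Definition PsiA (n1 : nat) (alpha : nat -> R) (p q : R) (delta : nat -> R) (t : R) : R :=
  let J := inJ alpha p q in
  let Jc := fun l => negb (J l) in
  let term1 := match omin n1 J alpha with
               | None => 0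
               | Some ab =>
                   rpow (rsum n1 (fun l => if J l then
                           rpow (delta l * rpow t (alpha l)) (p * q / (q - ab * p))
                         else 0)) (1 - ab * p / q)
               end in
  let term2 := odflt0 (omax n1 Jc (fun j => rpow (delta j * rpow t (alpha j)) p)) in
  rpow (term1 + term2) (/ p).

Definition rho_x (n d : nat) (x : nat -> nat -> R) (pu : R) : R :=
  odflt0 (omax n (fun _ => true) (fun i => pnorm_vec d (conj pu) (x i))).

Definition ninf (n1 : nat) (alpha : nat -> R) : R :=
  odflt0 (omax n1 (fun _ => true) (fun l => Rabs (alpha l))).

(* A = 2 diag(pw'-1,...,pw'-1,pu'-1) M, indices 0..K (0-based; K = last) *)
Definition Mmat (K : nat) (Cw Cu ainf : R) (i k : nat) : R :=
  if Nat.ltb i K then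
    (if Nat.ltb k K then 2 * Cw else 2 * Cu + ainf)
  else
    (if Nat.ltb k K then 2 * Cw + 1 else 2 * Cu + ainf - 1).
Definition Amat (K : nat) (pw pu Cw Cu ainf : R) (i k : nat) : R :=
  2 * (if Nat.ltb i K then conj pw - 1 else conj pu - 1) * Mmat K Cw Cu ainf i k.

(* Main.v *)
Require Import Defs.
From Stdlib Require Import Reals Lra Lia ClassicalEpsilon Classical FunctionalExtensionality.
Open Scope R_scope.

Lemma Deriv_eq g x l : derivable_pt_lim g x l -> Deriv g x = l.
Proof.
  intro H. unfold Deriv.
  apply (uniqueness_limite g x).
  - apply (epsilon_spec (inhabits 0) (fun l => derivable_pt_lim g x l)). eauto.
  - exact H.
Qed.

Lemma dl_ext f g x l : (forall t, f t = g t) -> derivable_pt_lim f x l -> derivable_pt_lim g x l.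
Proof. intros; eapply derivable_pt_lim_ext; eauto. Qed.

Lemma dl_local f g x l del : 0 < del -> (forall t, Rabs (t - x) < del -> f t = g t) ->
  derivable_pt_lim f x l -> derivable_pt_lim g x l.
Proof.
  intros Hd Hfg Hf. apply (derivable_pt_lim_locally_ext f g x (x - del) (x + del)); auto.
  - lra.
  - intros z Hz. apply Hfg. apply Rabs_def1; lra.
Qed.

Lemma dl_const c x : derivable_pt_lim (fun _ => c) x 0.
Proof. apply derivable_pt_lim_const. Qed.

Lemma dl_id x : derivable_pt_lim (fun t => t) x 1.
Proof. apply derivable_pt_lim_id. Qed.

Lemma dl_plus f g x a b : derivable_pt_lim f x a -> derivable_pt_lim g x b ->
  derivable_pt_lim (fun t => f t + g t) x (a + b).
Proof. intros; apply (derivable_pt_lim_plus f g); auto. Qed.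

Lemma dl_minus f g x a b : derivable_pt_lim f x a -> derivable_pt_lim g x b ->
  derivable_pt_lim (fun t => f t - g t) x (a - b).
Proof. intros; apply (derivable_pt_lim_minus f g); auto. Qed.

Lemma dl_mult f g x a b : derivable_pt_lim f x a -> derivable_pt_lim g x b ->
  derivable_pt_lim (fun t => f t * g t) x (a * g x + f x * b).
Proof. intros; apply (derivable_pt_lim_mult f g); auto. Qed.

Lemma dl_scal c f x a : derivable_pt_lim f x a -> derivable_pt_lim (fun t => c * f t) x (c * a).
Proof.
  intros H. apply (dl_ext (fun t => (fun _ => c) t * f t)); [reflexivity|].
  replace (c * a) with (0 * f x + c * a) by ring. apply dl_mult; auto. apply dl_const.
Qed.

Lemma dl_comp f h x a b : derivable_pt_lim f x a -> derivable_pt_lim h (f x) b ->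
  derivable_pt_lim (fun t => h (f t)) x (b * a).
Proof. intros; apply (derivable_pt_lim_comp f h); auto. Qed.

Lemma dl_exp f x a : derivable_pt_lim f x a -> derivable_pt_lim (fun t => exp (f t)) x (exp (f x) * a).
Proof. intros; apply dl_comp; auto. apply derivable_pt_lim_exp. Qed.

Lemma dl_ln f x a : 0 < f x -> derivable_pt_lim f x a -> derivable_pt_lim (fun t => ln (f t)) x (/ f x * a).
Proof. intros; apply dl_comp; auto. apply derivable_pt_lim_ln; auto. Qed.

Lemma dl_div f g x a b : g x <> 0 -> derivable_pt_lim f x a -> derivable_pt_lim g x b ->
  derivable_pt_lim (fun t => f t / g t) x ((a * g x - b * f x) / (g x)^2).
Proof.
  intros Hn Hf Hg. apply (dl_ext (f / g)%F). { intro t; reflexivity. }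
  replace ((g x)^2) with (Rsqr (g x)) by (unfold Rsqr; ring).
  apply derivable_pt_lim_div; auto.
Qed.

Lemma dl_Rpower f x a c : 0 < f x -> derivable_pt_lim f x a ->
  derivable_pt_lim (fun t => Rpower (f t) c) x (c * Rpower (f x) (c - 1) * a).
Proof.
  intros Hp Hf. apply (dl_comp f (fun z => Rpower z c)); auto.
  apply derivable_pt_lim_power; auto.
Qed.

Lemma rsum_ext N f g : (forall i, (i < N)%nat -> f i = g i) -> rsum N f = rsum N g.
Proof.
  induction N; simpl; intros; auto. rewrite IHN by (intros; apply H; lia). rewrite H by lia; auto.
Qed.

Lemma rsum_le N f g : (forall i, (i < N)%nat -> f i <= g i) -> rsum N f <= rsum N g.
Proof.
  induction N; simpl; intros; [lra|]. specialize (IHN (fun i Hi => H i ltac:(lia))).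
  specialize (H N ltac:(lia)). lra.
Qed.

Lemma rsum_nonneg N f : (forall i, (i < N)%nat -> 0 <= f i) -> 0 <= rsum N f.
Proof. intros. replace 0 with (rsum N (fun _ => 0)). apply rsum_le; auto.
  clear; induction N; simpl; auto; rewrite IHN; ring. Qed.

Lemma rsum_zero N : rsum N (fun _ => 0) = 0.
Proof. induction N; simpl; auto; rewrite IHN; ring. Qed.

Lemma rsum_plus N f g : rsum N (fun i => f i + g i) = rsum N f + rsum N g.
Proof. induction N; simpl; [ring|]. rewrite IHN; ring. Qed.

Lemma rsum_minus N f g : rsum N (fun i => f i - g i) = rsum N f - rsum N g.
Proof. induction N; simpl; [ring|]. rewrite IHN; ring. Qed.

Lemma rsum_scal N c f : rsum N (fun i => c * f i) = c * rsum N f.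
Proof. induction N; simpl; [ring|]. rewrite IHN; ring. Qed.

Lemma rsum_scal_r N c f : rsum N (fun i => f i * c) = rsum N f * c.
Proof. induction N; simpl; [ring|]. rewrite IHN; ring. Qed.

Lemma rsum_abs N f : Rabs (rsum N f) <= rsum N (fun i => Rabs (f i)).
Proof. induction N; simpl. rewrite Rabs_R0; lra.
  eapply Rle_trans. apply Rabs_triang. lra. Qed.

Lemma rsum_swap N M f : rsum N (fun i => rsum M (fun j => f i j)) = rsum M (fun j => rsum N (fun i => f i j)).
Proof.
  induction N; simpl. rewrite rsum_zero; auto.
  rewrite IHN. rewrite <- rsum_plus. reflexivity.
Qed.

Lemma rsum_delta N k v : (k < N)%nat -> rsum N (fun i => if Nat.eqb i k then v i else 0) = v k.
Proof.
  induction N; intros Hk; [lia|]. simpl.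
  destruct (Nat.eq_dec k N).
  - subst. rewrite Nat.eqb_refl. rewrite (rsum_ext _ _ (fun _ => 0)). rewrite rsum_zero; ring.
    intros i Hi. destruct (Nat.eqb_spec i N); [lia|auto].
  - rewrite IHN by lia. destruct (Nat.eqb_spec N k); [lia|ring].
Qed.

Lemma rsum_single_ge N f i : (i < N)%nat -> (forall j, (j < N)%nat -> 0 <= f j) -> f i <= rsum N f.
Proof.
  induction N; intros Hi Hf; [lia|]. simpl.
  destruct (Nat.eq_dec i N).
  - subst. assert (0 <= rsum N f) by (apply rsum_nonneg; intros; apply Hf; lia). lra.
  - assert (f i <= rsum N f) by (apply IHN; [lia| intros; apply Hf; lia]).
    specialize (Hf N ltac:(lia)). lra.
Qed.

Lemma rsum_pos N f i : (i < N)%nat -> (forall j, (j < N)%nat -> 0 <= f j) -> 0 < f i -> 0 < rsum N f.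
Proof. intros. pose proof (rsum_single_ge N f i H H0). lra. Qed.

Lemma dl_rsum N (F : R -> nat -> R) (D : nat -> R) x :
  (forall i, (i < N)%nat -> derivable_pt_lim (fun t => F t i) x (D i)) ->
  derivable_pt_lim (fun t => rsum N (F t)) x (rsum N D).
Proof.
  induction N; intros H; simpl.
  - apply dl_const.
  - apply dl_plus. apply IHN; intros; apply H; lia. apply H; lia.
Qed.

Lemma rsum_one f : rsum 1 f = f 0%nat.
Proof. simpl; ring. Qed.

Lemma Rpower_pos z a : 0 < Rpower z a.
Proof. unfold Rpower; apply exp_pos. Qed.

Lemma rpow_pos_eq z a : 0 < z -> rpow z a = Rpower z a.
Proof. intro H. unfold rpow. destruct (Req_EM_T z 0); [lra|auto]. Qed.

Lemma rpow_nonneg z a : 0 <= rpow z a.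
Proof. unfold rpow. destruct (Req_EM_T z 0); [lra|]. left; apply Rpower_pos. Qed.

Lemma rpow_0 a : rpow 0 a = 0.
Proof. unfold rpow. destruct (Req_EM_T 0 0); [auto|lra]. Qed.

Lemma Rpower_minus1 z c : 0 < z -> Rpower z (c - 1) = Rpower z c / z.
Proof.
  intro H. unfold Rminus. rewrite Rpower_plus, Rpower_Ropp, Rpower_1 by auto. unfold Rdiv; auto.
Qed.

Lemma psi_pos p g : 0 < g -> psi p g = Rpower g (p - 1).
Proof.
  intro H. unfold psi, rsign. destruct (Rlt_dec 0 g); [|lra].
  rewrite Rabs_right by lra. rewrite rpow_pos_eq by auto. ring.
Qed.

Lemma conj_gt1 p : 1 < p -> 1 < conj p.
Proof. intro H. unfold conj. apply (Rmult_lt_reg_r (p - 1)); [lra|]. field_simplify; lra. Qed.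

Lemma conj_e p : 1 < p -> (conj p - 1) * p = conj p.
Proof. intro H. unfold conj. field. lra. Qed.

Definition Ssum (N M : nat) (c : R) (g : nat -> nat -> R) : R :=
  rsum N (fun a => rsum M (fun b => Rpower (g a b) c)).

Definition piN (N M : nat) (c : R) (g : nat -> nat -> R) (a b : nat) : R :=
  Rpower (g a b) c / Ssum N M c g.

Lemma Ssum_pos N M c g j1 j2 : (j1 < N)%nat -> (j2 < M)%nat -> 0 < Ssum N M c g.
Proof.
  intros. unfold Ssum. apply (rsum_pos _ _ j1); auto.
  - intros; apply rsum_nonneg; intros; left; apply Rpower_pos.
  - apply (rsum_pos _ _ j2); auto. intros; left; apply Rpower_pos. apply Rpower_pos.
Qed.

Lemma piN_sum N M c g j1 j2 : (j1 < N)%nat -> (j2 < M)%nat ->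
  rsum N (fun a => rsum M (fun b => piN N M c g a b)) = 1.
Proof.
  intros. unfold piN. pose proof (Ssum_pos N M c g j1 j2 H H0).
  transitivity (rsum N (fun a => rsum M (fun b => Rpower (g a b) c)) / Ssum N M c g).
  - unfold Rdiv. rewrite <- rsum_scal_r. apply rsum_ext; intros. rewrite <- rsum_scal_r. auto.
  - fold (Ssum N M c g). field. lra.
Qed.

Lemma piN_nonneg N M c g a b : (exists j1 j2, (j1 < N)%nat /\ (j2 < M)%nat) -> 0 <= piN N M c g a b.
Proof.
  intros [j1 [j2 [H1 H2]]]. unfold piN. pose proof (Ssum_pos N M c g j1 j2 H1 H2).
  pose proof (Rpower_pos (g a b) c). unfold Rdiv; apply Rmult_le_pos; [lra|left; apply Rinv_0_lt_compat; lra].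
Qed.

Lemma pnorm_mat_pos_eq N M p (g : nat -> nat -> R) j1 j2 : 1 < p -> (j1 < N)%nat -> (j2 < M)%nat ->
  (forall a b, (a < N)%nat -> (b < M)%nat -> 0 < g a b) ->
  pnorm_mat N M p (fun a b => psi (conj p) (g a b)) = Rpower (Ssum N M (conj p) g) (/ p).
Proof.
  intros Hp H1 H2 Hg. unfold pnorm_mat.
  replace (rsum N (fun l => rsum M (fun m => rpow (Rabs (psi (conj p) (g l m))) p)))
    with (Ssum N M (conj p) g).
  - apply rpow_pos_eq. apply (Ssum_pos _ _ _ _ j1 j2); auto.
  - unfold Ssum. apply rsum_ext; intros. apply rsum_ext; intros.
    rewrite psi_pos by auto. rewrite Rabs_right by (left; apply Rpower_pos).
    rewrite rpow_pos_eq by apply Rpower_pos. rewrite Rpower_mult. rewrite conj_e; auto.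
Qed.

Lemma norm_deriv N M p rho (G : R -> nat -> nat -> R) (dG : nat -> nat -> R) t0 j1 j2 :
  1 < p -> 0 < t0 -> (j1 < N)%nat -> (j2 < M)%nat ->
  (forall t, 0 < t -> forall a b, (a < N)%nat -> (b < M)%nat -> 0 < G t a b) ->
  (forall a b, (a < N)%nat -> (b < M)%nat -> derivable_pt_lim (fun t => G t a b) t0 (dG a b)) ->
  derivable_pt_lim
    (fun t => rho * psi (conj p) (G t j1 j2) / pnorm_mat N M p (fun a b => psi (conj p) (G t a b))) t0
    (rho * psi (conj p) (G t0 j1 j2) / pnorm_mat N M p (fun a b => psi (conj p) (G t0 a b))
      * (conj p - 1) * (dG j1 j2 / G t0 j1 j2
         - rsum N (fun a => rsum M (fun b => piN N M (conj p) (G t0) a b * (dG a b / G t0 a b))))).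
Proof.
  intros Hp Ht0 H1 H2 Hpos Hd.
  set (c := conj p). set (e := c - 1).
  assert (Hce : e * p = c) by (unfold e, c; apply conj_e; auto).
  set (Floc := fun t => rho * Rpower (G t j1 j2) e / Rpower (Ssum N M c (G t)) (/ p)).
  apply (dl_local Floc _ _ _ t0); auto.
  { intros t Ht. assert (0 < t) by (apply Rabs_def2 in Ht; lra). unfold Floc.
    rewrite pnorm_mat_pos_eq with (j1 := j1) (j2 := j2) by auto.
    rewrite psi_pos by auto. reflexivity. }
  assert (HG0 : 0 < G t0 j1 j2) by auto.
  assert (HS0 : 0 < Ssum N M c (G t0)) by (apply (Ssum_pos _ _ _ _ j1 j2); auto).
  set (dS := rsum N (fun a => rsum M (fun b => c * Rpower (G t0 a b) (c - 1) * dG a b))).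
  assert (HdS : derivable_pt_lim (fun t => Ssum N M c (G t)) t0 dS).
  { unfold Ssum, dS. apply dl_rsum. intros a Ha. apply dl_rsum. intros b Hb.
    apply dl_Rpower; auto. }
  assert (HdF : derivable_pt_lim Floc t0
     ((rho * (e * Rpower (G t0 j1 j2) (e - 1) * dG j1 j2) * Rpower (Ssum N M c (G t0)) (/p)
       - (/ p * Rpower (Ssum N M c (G t0)) (/ p - 1) * dS) * (rho * Rpower (G t0 j1 j2) e))
       / (Rpower (Ssum N M c (G t0)) (/ p))^2)).
  { unfold Floc. apply (dl_div (fun t => rho * Rpower (G t j1 j2) e) (fun t => Rpower (Ssum N M c (G t)) (/p))).
    - pose proof (Rpower_pos (Ssum N M c (G t0)) (/p)). lra.
    - apply dl_scal. apply dl_Rpower; auto.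
    - apply dl_Rpower; auto. }
  eapply derivable_pt_lim_ext; [intro; reflexivity|].
  replace (rho * psi c (G t0 j1 j2) / pnorm_mat N M p (fun a b => psi c (G t0 a b)) * e *
     (dG j1 j2 / G t0 j1 j2 -
      rsum N (fun a => rsum M (fun b => piN N M c (G t0) a b * (dG a b / G t0 a b)))))
  with ((rho * (e * Rpower (G t0 j1 j2) (e - 1) * dG j1 j2) * Rpower (Ssum N M c (G t0)) (/p)
       - (/ p * Rpower (Ssum N M c (G t0)) (/ p - 1) * dS) * (rho * Rpower (G t0 j1 j2) e))
       / (Rpower (Ssum N M c (G t0)) (/ p))^2); [exact HdF|].
  rewrite pnorm_mat_pos_eq with (j1 := j1) (j2 := j2) by auto. fold c.
  rewrite psi_pos by auto. fold e.
  assert (HdS' : dS = e * p * Ssum N M c (G t0) *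
     rsum N (fun a => rsum M (fun b => piN N M c (G t0) a b * (dG a b / G t0 a b)))).
  { unfold dS. rewrite <- rsum_scal. apply rsum_ext; intros a Ha. rewrite <- rsum_scal.
    apply rsum_ext; intros b Hb. unfold piN. rewrite Rpower_minus1 by auto.
    rewrite Hce. field. split; [pose proof (Hpos t0 Ht0 a b Ha Hb); lra| lra]. }
  rewrite HdS'. rewrite !Rpower_minus1 by auto.
  pose proof (Rpower_pos (Ssum N M c (G t0)) (/p)).
  field. repeat split; lra.
Qed.

Lemma rsum2_le N M f g : (forall a b, (a < N)%nat -> (b < M)%nat -> f a b <= g a b) ->
  rsum N (fun a => rsum M (fun b => f a b)) <= rsum N (fun a => rsum M (fun b => g a b)).
Proof. intros. apply rsum_le; intros. apply rsum_le; intros. auto. Qed.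

Lemma rsum2_nonneg N M f : (forall a b, (a < N)%nat -> (b < M)%nat -> 0 <= f a b) ->
  0 <= rsum N (fun a => rsum M (fun b => f a b)).
Proof. intros. apply rsum_nonneg; intros. apply rsum_nonneg; intros. auto. Qed.

Lemma rsum2_scal N M c f : rsum N (fun a => rsum M (fun b => c * f a b)) = c * rsum N (fun a => rsum M (fun b => f a b)).
Proof. rewrite <- rsum_scal. apply rsum_ext; intros. apply rsum_scal. Qed.

Lemma rsum2_plus N M f g : rsum N (fun a => rsum M (fun b => f a b + g a b)) =
  rsum N (fun a => rsum M (fun b => f a b)) + rsum N (fun a => rsum M (fun b => g a b)).
Proof. rewrite <- rsum_plus. apply rsum_ext; intros. apply rsum_plus. Qed.

Lemma rsum2_swap N M P Q (f : nat -> nat -> nat -> nat -> R) :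
  rsum N (fun a => rsum M (fun b => rsum P (fun l => rsum Q (fun m => f a b l m)))) =
  rsum P (fun l => rsum Q (fun m => rsum N (fun a => rsum M (fun b => f a b l m)))).
Proof.
  transitivity (rsum N (fun a => rsum P (fun l => rsum Q (fun m => rsum M (fun b => f a b l m))))).
  { apply rsum_ext; intros a Ha. rewrite rsum_swap. apply rsum_ext; intros. apply rsum_swap. }
  rewrite rsum_swap. apply rsum_ext; intros l Hl. apply rsum_swap.
Qed.

Lemma combine N M P Q c (g : nat -> nat -> R) (dGp : nat -> nat -> nat -> nat -> R)
  (v : nat -> nat -> R) j1 j2 e F0 B :
  0 <= e -> 0 <= F0 -> 0 <= B -> (j1 < N)%nat -> (j2 < M)%nat ->
  (forall a b, (a < N)%nat -> (b < M)%nat -> 0 < g a b) ->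
  (forall l m, (l < P)%nat -> (m < Q)%nat -> 0 <= v l m) ->
  (forall a b, (a < N)%nat -> (b < M)%nat ->
     rsum P (fun l => rsum Q (fun m => v l m * Rabs (dGp l m a b))) <= B * g a b) ->
  rsum P (fun l => rsum Q (fun m =>
    Rabs (F0 * e * (dGp l m j1 j2 / g j1 j2
       - rsum N (fun a => rsum M (fun b => piN N M c g a b * (dGp l m a b / g a b))))) * v l m))
  <= 2 * e * B * F0.
Proof.
  intros He HF HB H1 H2 Hg Hv Hbd.
  assert (Hpi : forall a b, 0 <= piN N M c g a b).
  { intros; apply piN_nonneg; eauto. }
  eapply Rle_trans.
  { apply (rsum2_le P Q _ (fun l m => F0 * e * (v l m * Rabs (dGp l m j1 j2) / g j1 j2
        + rsum N (fun a => rsum M (fun b => piN N M c g a b * (v l m * Rabs (dGp l m a b) / g a b)))))).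
    intros l m Hl Hm.
    set (X := dGp l m j1 j2 / g j1 j2).
    set (Y := rsum N (fun a => rsum M (fun b => piN N M c g a b * (dGp l m a b / g a b)))).
    assert (HXY : Rabs (X - Y) * v l m <= v l m * Rabs (dGp l m j1 j2) / g j1 j2
        + rsum N (fun a => rsum M (fun b => piN N M c g a b * (v l m * Rabs (dGp l m a b) / g a b)))).
    { pose proof (Hv l m Hl Hm) as Hvl.
      eapply Rle_trans. apply Rmult_le_compat_r; [auto|]. apply Rabs_triang.
      rewrite Rabs_Ropp. rewrite Rmult_plus_distr_r. apply Rplus_le_compat.
      - unfold X, Rdiv. rewrite Rabs_mult, Rabs_inv. rewrite (Rabs_right (g j1 j2)) by (apply Rle_ge; left; auto).
        right; ring.
      - unfold Y. eapply Rle_trans. apply Rmult_le_compat_r; [auto|]. apply rsum_abs.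
        rewrite <- rsum_scal_r. apply rsum_le; intros a Ha.
        eapply Rle_trans. apply Rmult_le_compat_r; [auto|]. apply rsum_abs.
        rewrite <- rsum_scal_r. apply rsum_le; intros b Hb.
        unfold Rdiv. rewrite !Rabs_mult, Rabs_inv. rewrite (Rabs_right (g a b)) by (apply Rle_ge; left; auto).
        rewrite (Rabs_right (piN _ _ _ _ _ _)) by (apply Rle_ge; auto). right; ring. }
    rewrite Rabs_mult, (Rabs_right (F0 * e)) by (apply Rle_ge, Rmult_le_pos; auto).
    rewrite Rmult_assoc. apply Rmult_le_compat_l; [apply Rmult_le_pos; auto|]. exact HXY. }
  rewrite (rsum2_scal P Q (F0 * e)).  replace (2 * e * B * F0) with (F0 * e * (2 * B)) by ring.
  apply Rmult_le_compat_l; [apply Rmult_le_pos; auto|].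
  rewrite rsum2_plus.
  replace (2 * B) with (B + B * 1) by ring.
  apply Rplus_le_compat.
  - unfold Rdiv. rewrite (rsum2_le P Q _ (fun l m => / g j1 j2 * (v l m * Rabs (dGp l m j1 j2)))) by (intros; right; ring).
    rewrite rsum2_scal. pose proof (Hbd j1 j2 H1 H2). pose proof (Hg j1 j2 H1 H2).
    apply (Rmult_le_reg_l (g j1 j2)); auto. rewrite <- Rmult_assoc, Rinv_r by lra. lra.
  - rewrite <- (piN_sum N M c g j1 j2) by auto. rewrite <- rsum2_scal.
    rewrite (rsum2_swap P Q N M (fun l m a b => piN N M c g a b * (v l m * Rabs (dGp l m a b) / g a b))).
    apply rsum2_le; intros a b Ha Hb.
    unfold Rdiv. rewrite (rsum2_le P Q _ (fun l m => (piN N M c g a b * / g a b) * (v l m * Rabs (dGp l m a b)))) by (intros; right; ring).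
    rewrite rsum2_scal. pose proof (Hbd a b Ha Hb). pose proof (Hg a b Ha Hb).
    specialize (Hpi a b).
    replace (B * piN N M c g a b) with ((piN N M c g a b * / g a b) * (B * g a b)) by (field; lra).
    apply Rmult_le_compat_l; auto. apply Rmult_le_pos; auto. left; apply Rinv_0_lt_compat; auto.
Qed.

Lemma dl_cont_pos f t0 a : derivable_pt_lim f t0 a -> 0 < f t0 ->
  exists del, 0 < del /\ forall t, Rabs (t - t0) < del -> 0 < f t.
Proof.
  intros H Hp.
  pose proof (derivable_continuous_pt f t0 (exist _ a H)) as Hc.
  unfold continuity_pt, continue_in, limit1_in, limit_in in Hc.
  destruct (Hc (f t0 / 2) ltac:(lra)) as [alp [Halp Hf]].
  exists alp; split; auto. intros t Ht.
  destruct (Req_dec t t0). { subst; auto. }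
  assert (Hd : R_dist (f t) (f t0) < f t0 / 2).
  { apply (Hf t). split. unfold D_x, no_cond; split; auto. simpl. unfold R_dist. auto. }
  unfold R_dist in Hd. apply Rabs_def2 in Hd. lra.
Qed.

Lemma dl_rpow f t0 a c : derivable_pt_lim f t0 a -> 0 < f t0 ->
  derivable_pt_lim (fun t => rpow (f t) c) t0 (c * rpow (f t0) (c - 1) * a).
Proof.
  intros H Hp. destruct (dl_cont_pos f t0 a H Hp) as [del [Hdel Hpos]].
  rewrite rpow_pos_eq by auto.
  apply (dl_local (fun t => Rpower (f t) c) _ _ _ del); auto.
  - intros t Ht. rewrite rpow_pos_eq; auto.
  - apply dl_Rpower; auto.
Qed.

Lemma upd2_same (w : nat -> nat -> R) k l : upd2 w k l (w k l) = w.
Proof.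
  apply functional_extensionality; intro r; apply functional_extensionality; intro m.
  unfold upd2. destruct (Nat.eqb_spec r k), (Nat.eqb_spec m l); simpl; subst; auto.
Qed.

Definition dlt (r k : nat) : R := if Nat.eqb r k then 1 else 0.

Lemma dl_upd2 (w : nat -> nat -> R) k l r m t0 :
  derivable_pt_lim (fun t => upd2 w k l t r m) t0 (dlt r k * dlt m l).
Proof.
  unfold upd2, dlt. destruct (Nat.eqb r k), (Nat.eqb m l); simpl.
  - replace (1*1) with 1 by ring. apply dl_id.
  - replace (1*0) with 0 by ring. apply dl_const.
  - replace (0*1) with 0 by ring. apply dl_const.
  - replace (0*0) with 0 by ring. apply dl_const.
Qed.

Definition zf (d : nat) (u : nat -> nat -> R) (xi : nat -> R) (l : nat) : R :=
  rsum d (fun m => u l m * xi m).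
Definition hf (d : nat) (alpha : nat -> R) u xi l : R := rpow (zf d u xi l) (alpha l).
Definition h1f (d : nat) (alpha : nat -> R) u xi l : R := alpha l * rpow (zf d u xi l) (alpha l - 1).
Definition h2f (d : nat) (alpha : nat -> R) u xi l : R :=
  alpha l * ((alpha l - 1) * rpow (zf d u xi l) (alpha l - 1 - 1)).
Definition Sf K n1 d alpha w u xi : R := rsum K (fun r => exp (fr n1 d alpha w u r xi)).
Definition sf K n1 d alpha w u xi r : R := exp (fr n1 d alpha w u r xi) / Sf K n1 d alpha w u xi.
Definition cf K n1 d alpha w u xi (yv : nat) r : R := dlt r yv - sf K n1 d alpha w u xi r + 1.

Lemma fr_eq n1 d alpha w u r xi : fr n1 d alpha w u r xi = rsum n1 (fun l => w r l * hf d alpha u xi l).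
Proof. reflexivity. Qed.

Definition zdf d (dU : nat -> nat -> R) (xi : nat -> R) l := rsum d (fun m => dU l m * xi m).
Definition hdf d alpha u dU xi l := h1f d alpha u xi l * zdf d dU xi l.
Definition h1df d alpha u dU xi l := h2f d alpha u xi l * zdf d dU xi l.
Definition fdf n1 d alpha (w u dW dU : nat -> nat -> R) xi r :=
  rsum n1 (fun l => dW r l * hf d alpha u xi l + w r l * hdf d alpha u dU xi l).
Definition cdf K n1 d alpha w u dW dU xi r :=
  - (sf K n1 d alpha w u xi r * (fdf n1 d alpha w u dW dU xi r
       - rsum K (fun k => sf K n1 d alpha w u xi k * fdf n1 d alpha w u dW dU xi k))).

Definition zcond d (u : nat -> nat -> R) (xi : nat -> R) l := 0 < zf d u xi l \/ (forall m, (m < d)%nat -> xi m = 0).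

Lemma D_z d (U : R -> nat -> nat -> R) dU xi l t0 :
  (forall m, (m < d)%nat -> derivable_pt_lim (fun t => U t l m) t0 (dU l m)) ->
  derivable_pt_lim (fun t => zf d (U t) xi l) t0 (zdf d dU xi l).
Proof.
  intros H. unfold zf, zdf. apply (dl_rsum d (fun t m => U t l m * xi m)). intros m Hm.
  apply (dl_ext (fun t => U t l m * (fun _ => xi m) t)); [reflexivity|].
  replace (dU l m * xi m) with (dU l m * xi m + U t0 l m * 0) by ring.
  apply dl_mult; auto. apply dl_const.
Qed.

Lemma zdf_zero d dU xi l : (forall m, (m < d)%nat -> xi m = 0) -> zdf d dU xi l = 0.
Proof. intros H. unfold zdf. rewrite (rsum_ext _ _ (fun _ => 0)). apply rsum_zero. intros; rewrite H; auto; ring. Qed.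

Lemma zf_zero d u xi l : (forall m, (m < d)%nat -> xi m = 0) -> zf d u xi l = 0.
Proof. intros H. unfold zf. rewrite (rsum_ext _ _ (fun _ => 0)). apply rsum_zero. intros; rewrite H; auto; ring. Qed.

Lemma D_rpowz d (U : R -> nat -> nat -> R) dU xi l t0 c :
  (forall m, (m < d)%nat -> derivable_pt_lim (fun t => U t l m) t0 (dU l m)) ->
  zcond d (U t0) xi l ->
  derivable_pt_lim (fun t => rpow (zf d (U t) xi l) c) t0
    (c * rpow (zf d (U t0) xi l) (c - 1) * zdf d dU xi l).
Proof.
  intros H [Hz | Hz].
  - apply dl_rpow; auto. apply D_z; auto.
  - rewrite (zdf_zero d dU xi l Hz). replace (c * rpow (zf d (U t0) xi l) (c - 1) * 0) with 0 by ring.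
    apply (dl_ext (fun _ => rpow 0 c)). { intro t. rewrite zf_zero; auto. } apply dl_const.
Qed.

Lemma D_h d alpha (U : R -> nat -> nat -> R) dU xi l t0 :
  (forall m, (m < d)%nat -> derivable_pt_lim (fun t => U t l m) t0 (dU l m)) ->
  zcond d (U t0) xi l ->
  derivable_pt_lim (fun t => hf d alpha (U t) xi l) t0 (hdf d alpha (U t0) dU xi l).
Proof. intros. unfold hf, hdf, h1f. apply D_rpowz; auto. Qed.

Lemma D_h1 d alpha (U : R -> nat -> nat -> R) dU xi l t0 :
  (forall m, (m < d)%nat -> derivable_pt_lim (fun t => U t l m) t0 (dU l m)) ->
  zcond d (U t0) xi l ->
  derivable_pt_lim (fun t => h1f d alpha (U t) xi l) t0 (h1df d alpha (U t0) dU xi l).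
Proof.
  intros. unfold h1f, h1df, h2f. rewrite !Rmult_assoc. apply dl_scal.
  rewrite <- Rmult_assoc. apply D_rpowz; auto.
Qed.

Lemma D_f n1 d alpha (W U : R -> nat -> nat -> R) dW dU xi r t0 :
  (forall l, (l < n1)%nat -> derivable_pt_lim (fun t => W t r l) t0 (dW r l)) ->
  (forall l m, (l < n1)%nat -> (m < d)%nat -> derivable_pt_lim (fun t => U t l m) t0 (dU l m)) ->
  (forall l, (l < n1)%nat -> zcond d (U t0) xi l) ->
  derivable_pt_lim (fun t => fr n1 d alpha (W t) (U t) r xi) t0 (fdf n1 d alpha (W t0) (U t0) dW dU xi r).
Proof.
  intros HW HU Hz. unfold fdf.
  apply (dl_ext (fun t => rsum n1 ((fun t l => W t r l * hf d alpha (U t) xi l) t))); [reflexivity|].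
  apply dl_rsum. intros l Hl.
  apply (dl_ext (fun t => (fun t => W t r l) t * (fun t => hf d alpha (U t) xi l) t)); [reflexivity|].
  apply dl_mult; auto. apply D_h; auto.
Qed.

Definition fdv n1 d alpha W0 U0 dW dU xi := fun r => fdf n1 d alpha W0 U0 dW dU xi r.

Lemma D_S K n1 d alpha (W U : R -> nat -> nat -> R) dW dU xi t0 :
  (forall r l, (r < K)%nat -> (l < n1)%nat -> derivable_pt_lim (fun t => W t r l) t0 (dW r l)) ->
  (forall l m, (l < n1)%nat -> (m < d)%nat -> derivable_pt_lim (fun t => U t l m) t0 (dU l m)) ->
  (forall l, (l < n1)%nat -> zcond d (U t0) xi l) ->
  derivable_pt_lim (fun t => Sf K n1 d alpha (W t) (U t) xi) t0
    (rsum K (fun r => exp (fr n1 d alpha (W t0) (U t0) r xi) * fdf n1 d alpha (W t0) (U t0) dW dU xi r)).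
Proof.
  intros HW HU Hz. unfold Sf.
  apply (dl_ext (fun t => rsum K ((fun t r => exp (fr n1 d alpha (W t) (U t) r xi)) t))); [reflexivity|].
  apply dl_rsum. intros r Hr. apply (dl_exp (fun t => fr n1 d alpha (W t) (U t) r xi)).
  apply D_f; auto.
Qed.

Lemma Sf_pos K n1 d alpha w u xi : (0 < K)%nat -> 0 < Sf K n1 d alpha w u xi.
Proof. intros. unfold Sf. apply (rsum_pos _ _ 0); auto. intros; left; apply exp_pos. apply exp_pos. Qed.

Lemma D_s K n1 d alpha (W U : R -> nat -> nat -> R) dW dU xi r t0 : (r < K)%nat ->
  (forall r l, (r < K)%nat -> (l < n1)%nat -> derivable_pt_lim (fun t => W t r l) t0 (dW r l)) ->
  (forall l m, (l < n1)%nat -> (m < d)%nat -> derivable_pt_lim (fun t => U t l m) t0 (dU l m)) ->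
  (forall l, (l < n1)%nat -> zcond d (U t0) xi l) ->
  derivable_pt_lim (fun t => sf K n1 d alpha (W t) (U t) xi r) t0
    (sf K n1 d alpha (W t0) (U t0) xi r * (fdf n1 d alpha (W t0) (U t0) dW dU xi r
       - rsum K (fun k => sf K n1 d alpha (W t0) (U t0) xi k * fdf n1 d alpha (W t0) (U t0) dW dU xi k))).
Proof.
  intros Hr HW HU Hz. unfold sf.
  assert (HS := Sf_pos K n1 d alpha (W t0) (U t0) xi ltac:(lia)).
  eapply derivable_pt_lim_ext; [intro; reflexivity|].
  replace (exp (fr n1 d alpha (W t0) (U t0) r xi) / Sf K n1 d alpha (W t0) (U t0) xi *
     (fdf n1 d alpha (W t0) (U t0) dW dU xi r -
      rsum K (fun k => exp (fr n1 d alpha (W t0) (U t0) k xi) / Sf K n1 d alpha (W t0) (U t0) xi *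
         fdf n1 d alpha (W t0) (U t0) dW dU xi k)))
  with ((exp (fr n1 d alpha (W t0) (U t0) r xi) * fdf n1 d alpha (W t0) (U t0) dW dU xi r
          * Sf K n1 d alpha (W t0) (U t0) xi
        - rsum K (fun r => exp (fr n1 d alpha (W t0) (U t0) r xi) * fdf n1 d alpha (W t0) (U t0) dW dU xi r)
          * exp (fr n1 d alpha (W t0) (U t0) r xi)) / (Sf K n1 d alpha (W t0) (U t0) xi)^2).
  - apply (dl_div (fun t => exp (fr n1 d alpha (W t) (U t) r xi)) (fun t => Sf K n1 d alpha (W t) (U t) xi)).
    + lra.
    + apply (dl_exp (fun t => fr n1 d alpha (W t) (U t) r xi)). apply D_f; auto.
    + apply D_S; auto.
  - unfold Rdiv. rewrite (rsum_ext K (fun k => exp (fr n1 d alpha (W t0) (U t0) k xi) * / Sf K n1 d alpha (W t0) (U t0) xi *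
         fdf n1 d alpha (W t0) (U t0) dW dU xi k) (fun k => / Sf K n1 d alpha (W t0) (U t0) xi *
       (exp (fr n1 d alpha (W t0) (U t0) k xi) * fdf n1 d alpha (W t0) (U t0) dW dU xi k))) by (intros; ring).
    rewrite rsum_scal. field. lra.
Qed.

Lemma D_c K n1 d alpha (W U : R -> nat -> nat -> R) dW dU xi yv r t0 : (r < K)%nat ->
  (forall r l, (r < K)%nat -> (l < n1)%nat -> derivable_pt_lim (fun t => W t r l) t0 (dW r l)) ->
  (forall l m, (l < n1)%nat -> (m < d)%nat -> derivable_pt_lim (fun t => U t l m) t0 (dU l m)) ->
  (forall l, (l < n1)%nat -> zcond d (U t0) xi l) ->
  derivable_pt_lim (fun t => cf K n1 d alpha (W t) (U t) xi yv r) t0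
    (cdf K n1 d alpha (W t0) (U t0) dW dU xi r).
Proof.
  intros. unfold cf, cdf.
  apply (dl_ext (fun t => ((fun _ => dlt r yv) t - (fun t => sf K n1 d alpha (W t) (U t) xi r) t) + (fun _ => 1) t)); [reflexivity|].
  replace (- (sf K n1 d alpha (W t0) (U t0) xi r * (fdf n1 d alpha (W t0) (U t0) dW dU xi r -
       rsum K (fun k => sf K n1 d alpha (W t0) (U t0) xi k * fdf n1 d alpha (W t0) (U t0) dW dU xi k))))
   with ((0 - sf K n1 d alpha (W t0) (U t0) xi r * (fdf n1 d alpha (W t0) (U t0) dW dU xi r -
       rsum K (fun k => sf K n1 d alpha (W t0) (U t0) xi k * fdf n1 d alpha (W t0) (U t0) dW dU xi k))) + 0) by ring.
  apply dl_plus; [|apply dl_const]. apply dl_minus; [apply dl_const|]. apply D_s; auto.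
Qed.

Lemma rsum_dlt N k v : (k < N)%nat -> rsum N (fun i => dlt i k * v i) = v k.
Proof.
  intros Hk. rewrite <- (rsum_delta N k v Hk). apply rsum_ext; intros. unfold dlt.
  destruct (Nat.eqb i k); ring.
Qed.

Lemma rsum_dlt' N k v : (k < N)%nat -> rsum N (fun i => v i * dlt i k) = v k.
Proof. intros. rewrite <- (rsum_dlt N k v H). apply rsum_ext; intros; ring. Qed.

Lemma D_loss K n1 d alpha (W U : R -> nat -> nat -> R) dW dU xi yv t0 : (yv < K)%nat ->
  (forall r l, (r < K)%nat -> (l < n1)%nat -> derivable_pt_lim (fun t => W t r l) t0 (dW r l)) ->
  (forall l m, (l < n1)%nat -> (m < d)%nat -> derivable_pt_lim (fun t => U t l m) t0 (dU l m)) ->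
  (forall l, (l < n1)%nat -> zcond d (U t0) xi l) ->
  derivable_pt_lim (fun t => - lossL K yv (fun r => fr n1 d alpha (W t) (U t) r xi)
       + rsum K (fun r => fr n1 d alpha (W t) (U t) r xi)) t0
    (rsum K (fun r => cf K n1 d alpha (W t0) (U t0) xi yv r * fdf n1 d alpha (W t0) (U t0) dW dU xi r)).
Proof.
  intros Hy HW HU Hz.
  assert (HS := Sf_pos K n1 d alpha (W t0) (U t0) xi ltac:(lia)).
  unfold lossL.
  apply (dl_ext (fun t => - (- (fun t => fr n1 d alpha (W t) (U t) yv xi) t + (fun t => ln (Sf K n1 d alpha (W t) (U t) xi)) t)
     + (fun t => rsum K ((fun t r => fr n1 d alpha (W t) (U t) r xi) t)) t)); [reflexivity|].
  set (fd := fdf n1 d alpha (W t0) (U t0) dW dU xi).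
  replace (rsum K (fun r => cf K n1 d alpha (W t0) (U t0) xi yv r * fd r))
    with (- (- fd yv + / Sf K n1 d alpha (W t0) (U t0) xi *
            rsum K (fun r => exp (fr n1 d alpha (W t0) (U t0) r xi) * fd r)) + rsum K fd).
  - apply dl_plus.
    + apply (dl_ext (fun t => - ((fun t => - fr n1 d alpha (W t) (U t) yv xi) t + (fun t => ln (Sf K n1 d alpha (W t) (U t) xi)) t))); [reflexivity|].
      apply derivable_pt_lim_opp.
      apply dl_plus.
      * apply (dl_ext (fun t => - (fun t => fr n1 d alpha (W t) (U t) yv xi) t)); [reflexivity|].
        apply derivable_pt_lim_opp. apply D_f; auto.
      * apply dl_ln; auto. apply D_S; auto.
    + apply dl_rsum; intros. apply D_f; auto.
  - unfold cf. rewrite (rsum_ext K (fun r => (dlt r yv - sf K n1 d alpha (W t0) (U t0) xi r + 1) * fd r) (fun r => dlt r yv * fd r - sf K n1 d alpha (W t0) (U t0) xi r * fd r + fd r))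
      by (intros; ring).
    rewrite rsum_plus, rsum_minus, rsum_dlt by auto.
    unfold sf. unfold Rdiv.
    rewrite (rsum_ext K (fun r => exp (fr n1 d alpha (W t0) (U t0) r xi) * / Sf K n1 d alpha (W t0) (U t0) xi * fd r)
       (fun r => / Sf K n1 d alpha (W t0) (U t0) xi * (exp (fr n1 d alpha (W t0) (U t0) r xi) * fd r))) by (intros; ring).
    rewrite rsum_scal. ring.
Qed.

Lemma D_Phi n K n1 d x y alpha eps (W U : R -> nat -> nat -> R) dW dU t0 :
  (forall i, (i < n)%nat -> (y i < K)%nat) ->
  (forall r l, (r < K)%nat -> (l < n1)%nat -> derivable_pt_lim (fun t => W t r l) t0 (dW r l)) ->
  (forall l m, (l < n1)%nat -> (m < d)%nat -> derivable_pt_lim (fun t => U t l m) t0 (dU l m)) ->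
  (forall i l, (i < n)%nat -> (l < n1)%nat -> zcond d (U t0) (x i) l) ->
  derivable_pt_lim (fun t => Phi n K n1 d x y alpha eps (W t) (U t)) t0
    (/ INR n * rsum n (fun i => rsum K (fun r => cf K n1 d alpha (W t0) (U t0) (x i) (y i) r
          * fdf n1 d alpha (W t0) (U t0) dW dU (x i) r))
     + eps * (rsum K (fun r => rsum n1 (fun l => dW r l)) + rsum n1 (fun l => rsum d (fun m => dU l m)))).
Proof.
  intros Hy HW HU Hz. unfold Phi. apply dl_plus.
  - apply dl_scal. apply (dl_rsum n (fun t i => - lossL K (y i) (fun r => fr n1 d alpha (W t) (U t) r (x i)) +
        rsum K (fun r => fr n1 d alpha (W t) (U t) r (x i)))).
    intros i Hi. apply D_loss; auto.
  - apply dl_scal. apply dl_plus.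
    + apply (dl_rsum K (fun t r => rsum n1 (fun l => W t r l))). intros r Hr.
      apply (dl_rsum n1 (fun t l => W t r l)). intros; auto.
    + apply (dl_rsum n1 (fun t l => rsum d (fun m => U t l m))). intros l Hl.
      apply (dl_rsum d (fun t m => U t l m)). intros; auto.
Qed.

Definition gWf n K n1 d x y alpha eps (w u : nat -> nat -> R) r l :=
  / INR n * rsum n (fun i => cf K n1 d alpha w u (x i) (y i) r * hf d alpha u (x i) l) + eps.
Definition gUf n K n1 d (x : nat -> nat -> R) y alpha eps (w u : nat -> nat -> R) l m :=
  / INR n * rsum n (fun i => rsum K (fun r => cf K n1 d alpha w u (x i) (y i) r * w r l)
       * h1f d alpha u (x i) l * x i m) + eps.

Lemma dl_eq_val f x l1 l2 : derivable_pt_lim f x l1 -> l1 = l2 -> derivable_pt_lim f x l2.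
Proof. intros H E; subst; auto. Qed.

Definition posU n1 d (u : nat -> nat -> R) := forall l m, (l < n1)%nat -> (m < d)%nat -> 0 < u l m.
Definition posW K n1 (w : nat -> nat -> R) := forall r l, (r < K)%nat -> (l < n1)%nat -> 0 < w r l.

Lemma zcond_of_pos n1 d u xi l : posU n1 d u -> (forall m, (m < d)%nat -> 0 <= xi m) -> (l < n1)%nat ->
  zcond d u xi l.
Proof.
  intros Hu Hx Hl. unfold zcond.
  destruct (classic (exists m, (m < d)%nat /\ xi m <> 0)) as [[m [Hm Hne]] | Hno].
  - left. unfold zf. apply (rsum_pos _ _ m); auto.
    + intros j Hj. apply Rmult_le_pos; [left; apply Hu|apply Hx]; auto.
    + apply Rmult_lt_0_compat; auto. specialize (Hx m Hm); lra.
  - right. intros m Hm. apply NNPP. intro Hne. apply Hno; eauto.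
Qed.

Lemma zdf_0 d xi l : zdf d (fun _ _ => 0) xi l = 0.
Proof. unfold zdf. rewrite (rsum_ext _ _ (fun _ => 0)) by (intros; ring). apply rsum_zero. Qed.

Lemma rsum2_dlt N M k l : (k < N)%nat -> (l < M)%nat ->
  rsum N (fun r => rsum M (fun m => dlt r k * dlt m l)) = 1.
Proof.
  intros. rewrite (rsum_ext N _ (fun r => dlt r k * 1)).
  - rewrite rsum_dlt; auto.
  - intros r Hr. rewrite rsum_scal. rewrite (rsum_ext M _ (fun m => 1 * dlt m l)) by (intros; ring).
    rewrite rsum_dlt'; auto.
Qed.

Lemma rsum2_zero N M : rsum N (fun r => rsum M (fun m => 0)) = 0.
Proof. rewrite (rsum_ext N _ (fun _ => 0)). apply rsum_zero. intros; apply rsum_zero. Qed.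

Lemma gradW_eq n K n1 d x y alpha eps w u r l :
  (forall i, (i < n)%nat -> (y i < K)%nat) ->
  (forall i m, (i < n)%nat -> (m < d)%nat -> 0 <= x i m) ->
  posU n1 d u -> (r < K)%nat -> (l < n1)%nat ->
  gradW (Phi n K n1 d x y alpha eps) r l w u = gWf n K n1 d x y alpha eps w u r l.
Proof.
  intros Hy Hx Hu Hr Hl. unfold gradW. apply Deriv_eq.
  eapply dl_eq_val.
  - apply (D_Phi n K n1 d x y alpha eps (fun t => upd2 w r l t) (fun _ => u)
        (fun r' l' => dlt r' r * dlt l' l) (fun _ _ => 0) (w r l)); auto.
    + intros; apply dl_upd2.
    + intros; apply dl_const.
    + intros. apply (zcond_of_pos n1); auto.
  - rewrite upd2_same. simpl. rewrite rsum2_dlt by auto. rewrite rsum2_zero.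
    unfold gWf. f_equal; [|ring]. f_equal. apply rsum_ext; intros i Hi.
    rewrite (rsum_ext K _ (fun r' => (cf K n1 d alpha w u (x i) (y i) r' * hf d alpha u (x i) l) * dlt r' r)).
    + apply rsum_dlt'; auto.
    + intros r' Hr'. unfold fdf, hdf. rewrite (rsum_ext n1 _ (fun l' => dlt r' r * (hf d alpha u (x i) l' * dlt l' l))).
      * rewrite rsum_scal, rsum_dlt'; auto. ring.
      * intros; rewrite zdf_0; ring.
Qed.

Lemma gradU_eq n K n1 d x y alpha eps w u l m :
  (forall i, (i < n)%nat -> (y i < K)%nat) ->
  (forall i m, (i < n)%nat -> (m < d)%nat -> 0 <= x i m) ->
  posU n1 d u -> (l < n1)%nat -> (m < d)%nat ->
  gradU (Phi n K n1 d x y alpha eps) l m w u = gUf n K n1 d x y alpha eps w u l m.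
Proof.
  intros Hy Hx Hu Hl Hm. unfold gradU. apply Deriv_eq.
  eapply dl_eq_val.
  - apply (D_Phi n K n1 d x y alpha eps (fun _ => w) (fun t => upd2 u l m t)
        (fun _ _ => 0) (fun l' m' => dlt l' l * dlt m' m) (u l m)); auto.
    + intros; apply dl_const.
    + intros; apply dl_upd2.
    + intros. rewrite upd2_same. apply (zcond_of_pos n1); auto.
  - rewrite upd2_same. simpl. rewrite rsum2_dlt by auto. rewrite rsum2_zero.
    unfold gUf. f_equal; [|ring]. f_equal. apply rsum_ext; intros i Hi.
    rewrite <- rsum_scal_r. rewrite <- rsum_scal_r.
    apply rsum_ext; intros r' Hr'. unfold fdf, hdf.
    rewrite (rsum_ext n1 _ (fun l' => (w r' l' * h1f d alpha u (x i) l' * x i m) * dlt l' l)).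
    + rewrite rsum_dlt'; auto. ring.
    + intros l' Hl'. unfold zdf. rewrite Rmult_0_l, Rplus_0_l.
      rewrite (rsum_ext d _ (fun m' => (dlt l' l * x i m') * dlt m' m)) by (intros; ring).
      rewrite rsum_dlt' by auto. ring.
Qed.

Lemma D_gW n K n1 d x y alpha eps (W U : R -> nat -> nat -> R) dW dU t0 r l :
  (r < K)%nat -> (l < n1)%nat ->
  (forall r l, (r < K)%nat -> (l < n1)%nat -> derivable_pt_lim (fun t => W t r l) t0 (dW r l)) ->
  (forall l m, (l < n1)%nat -> (m < d)%nat -> derivable_pt_lim (fun t => U t l m) t0 (dU l m)) ->
  (forall i l, (i < n)%nat -> (l < n1)%nat -> zcond d (U t0) (x i) l) ->
  derivable_pt_lim (fun t => gWf n K n1 d x y alpha eps (W t) (U t) r l) t0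
    (/ INR n * rsum n (fun i => cdf K n1 d alpha (W t0) (U t0) dW dU (x i) r * hf d alpha (U t0) (x i) l
        + cf K n1 d alpha (W t0) (U t0) (x i) (y i) r * hdf d alpha (U t0) dU (x i) l)).
Proof.
  intros Hr Hl HW HU Hz. unfold gWf.
  replace (/ INR n * rsum n (fun i => cdf K n1 d alpha (W t0) (U t0) dW dU (x i) r * hf d alpha (U t0) (x i) l
        + cf K n1 d alpha (W t0) (U t0) (x i) (y i) r * hdf d alpha (U t0) dU (x i) l))
   with (/ INR n * rsum n (fun i => cdf K n1 d alpha (W t0) (U t0) dW dU (x i) r * hf d alpha (U t0) (x i) l
        + cf K n1 d alpha (W t0) (U t0) (x i) (y i) r * hdf d alpha (U t0) dU (x i) l) + 0) by ring.
  apply dl_plus; [|apply dl_const]. apply dl_scal.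
  apply (dl_rsum n (fun t i => cf K n1 d alpha (W t) (U t) (x i) (y i) r * hf d alpha (U t) (x i) l)).
  intros i Hi.
  apply (dl_mult (fun t => cf K n1 d alpha (W t) (U t) (x i) (y i) r) (fun t => hf d alpha (U t) (x i) l)).
  - apply D_c; auto.
  - apply D_h; auto.
Qed.

Lemma D_gU n K n1 d x y alpha eps (W U : R -> nat -> nat -> R) dW dU t0 l m :
  (l < n1)%nat -> (m < d)%nat ->
  (forall r l, (r < K)%nat -> (l < n1)%nat -> derivable_pt_lim (fun t => W t r l) t0 (dW r l)) ->
  (forall l m, (l < n1)%nat -> (m < d)%nat -> derivable_pt_lim (fun t => U t l m) t0 (dU l m)) ->
  (forall i l, (i < n)%nat -> (l < n1)%nat -> zcond d (U t0) (x i) l) ->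
  derivable_pt_lim (fun t => gUf n K n1 d x y alpha eps (W t) (U t) l m) t0
    (/ INR n * rsum n (fun i =>
       (rsum K (fun r => cdf K n1 d alpha (W t0) (U t0) dW dU (x i) r * W t0 r l
                        + cf K n1 d alpha (W t0) (U t0) (x i) (y i) r * dW r l)
         * h1f d alpha (U t0) (x i) l
        + rsum K (fun r => cf K n1 d alpha (W t0) (U t0) (x i) (y i) r * W t0 r l)
         * h1df d alpha (U t0) dU (x i) l) * x i m)).
Proof.
  intros Hl Hm HW HU Hz. unfold gUf.
  eapply dl_eq_val.
  { apply dl_plus; [|apply (dl_const eps)]. apply dl_scal.
    apply (dl_rsum n (fun t i => rsum K (fun r => cf K n1 d alpha (W t) (U t) (x i) (y i) r * W t r l)
       * h1f d alpha (U t) (x i) l * x i m)).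
    intros i Hi.
    apply (dl_mult (fun t => rsum K (fun r => cf K n1 d alpha (W t) (U t) (x i) (y i) r * W t r l)
       * h1f d alpha (U t) (x i) l) (fun _ => x i m)); [|apply dl_const].
    apply (dl_mult (fun t => rsum K (fun r => cf K n1 d alpha (W t) (U t) (x i) (y i) r * W t r l))
       (fun t => h1f d alpha (U t) (x i) l)).
    - apply (dl_rsum K (fun t r => cf K n1 d alpha (W t) (U t) (x i) (y i) r * W t r l)).
      intros r Hr. apply (dl_mult (fun t => cf K n1 d alpha (W t) (U t) (x i) (y i) r) (fun t => W t r l)).
      + apply D_c; auto.
      + auto.
    - apply D_h1; auto. }
  rewrite Rplus_0_r. f_equal. apply rsum_ext; intros i Hi. ring.
Qed.

Lemma sf_pos K n1 d alpha w u xi r : (0 < K)%nat -> 0 < sf K n1 d alpha w u xi r.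
Proof. intros. unfold sf. apply Rdiv_lt_0_compat. apply exp_pos. apply Sf_pos; auto. Qed.

Lemma sf_sum K n1 d alpha w u xi : (0 < K)%nat -> rsum K (fun r => sf K n1 d alpha w u xi r) = 1.
Proof.
  intros. unfold sf. unfold Rdiv. rewrite rsum_scal_r. fold (Sf K n1 d alpha w u xi).
  apply Rinv_r. pose proof (Sf_pos K n1 d alpha w u xi H); lra.
Qed.

Lemma sf_le1 K n1 d alpha w u xi r : (r < K)%nat -> sf K n1 d alpha w u xi r <= 1.
Proof.
  intros. rewrite <- (sf_sum K n1 d alpha w u xi) by lia. apply rsum_single_ge; auto.
  intros; left; apply sf_pos; lia.
Qed.

Lemma cf_ge K n1 d alpha w u xi yv r : 1 - sf K n1 d alpha w u xi r <= cf K n1 d alpha w u xi yv r.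
Proof. unfold cf, dlt. destruct (Nat.eqb r yv); lra. Qed.

Lemma cf_nonneg K n1 d alpha w u xi yv r : (r < K)%nat -> 0 <= cf K n1 d alpha w u xi yv r.
Proof. intros. pose proof (cf_ge K n1 d alpha w u xi yv r). pose proof (sf_le1 K n1 d alpha w u xi r H). lra. Qed.

Definition af K n1 d alpha w u xi r k :=
  sf K n1 d alpha w u xi r * (dlt r k - sf K n1 d alpha w u xi k).

Lemma cdf_eq K n1 d alpha w u dW dU xi r : (r < K)%nat ->
  cdf K n1 d alpha w u dW dU xi r = - rsum K (fun k => af K n1 d alpha w u xi r k * fdf n1 d alpha w u dW dU xi k).
Proof.
  intros Hr. unfold cdf, af. f_equal.
  rewrite (rsum_ext K (fun k => sf K n1 d alpha w u xi r * (dlt r k - sf K n1 d alpha w u xi k) * fdf n1 d alpha w u dW dU xi k) (fun k => sf K n1 d alpha w u xi r * (dlt k r * fdf n1 d alpha w u dW dU xi k)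
     - sf K n1 d alpha w u xi r * (sf K n1 d alpha w u xi k * fdf n1 d alpha w u dW dU xi k))).
  - rewrite rsum_minus, !rsum_scal, rsum_dlt by auto. ring.
  - intros k Hk. unfold dlt. rewrite (Nat.eqb_sym k r). ring.
Qed.

Lemma af_sum K n1 d alpha w u xi yv r : (r < K)%nat ->
  rsum K (fun k => Rabs (af K n1 d alpha w u xi r k)) <= 2 * cf K n1 d alpha w u xi yv r.
Proof.
  intros Hr. unfold af.
  set (s := sf K n1 d alpha w u xi).
  assert (Hs : forall k, (k < K)%nat -> 0 < s k /\ s k <= 1).
  { intros; split; [apply sf_pos; lia| apply sf_le1; auto]. }
  rewrite (rsum_ext K (fun k => Rabs (s r * (dlt r k - s k))) (fun k => s r * (dlt k r + s k - 2 * (s r * dlt k r)))).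
  - rewrite rsum_scal. rewrite rsum_minus, rsum_plus, rsum_scal.
    rewrite (rsum_ext K (fun k => dlt k r) (fun k => dlt k r * 1)) by (intros; ring).
    rewrite rsum_dlt by auto. rewrite rsum_dlt' by auto.
    unfold s; rewrite sf_sum by lia. fold s.
    pose proof (cf_ge K n1 d alpha w u xi yv r). fold s in H. destruct (Hs r Hr). nra.
  - intros k Hk. destruct (Hs r Hr), (Hs k Hk). rewrite Rabs_mult, Rabs_right by lra.
    unfold dlt. rewrite (Nat.eqb_sym k r). destruct (Nat.eqb_spec r k).
    + subst. rewrite Rabs_right by lra. ring.
    + rewrite Rabs_left1 by lra. ring.
Qed.

Lemma rsum3_swap P Q K (f : nat -> nat -> nat -> R) :
  rsum P (fun l => rsum Q (fun m => rsum K (fun k => f l m k))) =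
  rsum K (fun k => rsum P (fun l => rsum Q (fun m => f l m k))).
Proof.
  rewrite (rsum_ext P _ (fun l => rsum K (fun k => rsum Q (fun m => f l m k)))).
  - apply rsum_swap.
  - intros; apply rsum_swap.
Qed.

Lemma cdf_wbound K n1 d alpha w u xi yv r P Q (dWp dUp : nat -> nat -> nat -> nat -> R) (v : nat -> nat -> R) Bf :
  (r < K)%nat -> 0 <= Bf ->
  (forall l m, (l < P)%nat -> (m < Q)%nat -> 0 <= v l m) ->
  (forall k, (k < K)%nat -> rsum P (fun l => rsum Q (fun m =>
      v l m * Rabs (fdf n1 d alpha w u (dWp l m) (dUp l m) xi k))) <= Bf) ->
  rsum P (fun l => rsum Q (fun m => v l m * Rabs (cdf K n1 d alpha w u (dWp l m) (dUp l m) xi r)))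
   <= 2 * cf K n1 d alpha w u xi yv r * Bf.
Proof.
  intros Hr HB Hv Hf.
  eapply Rle_trans.
  { apply (rsum2_le P Q _ (fun l m => rsum K (fun k => Rabs (af K n1 d alpha w u xi r k) *
      (v l m * Rabs (fdf n1 d alpha w u (dWp l m) (dUp l m) xi k))))).
    intros l m Hl Hm. rewrite cdf_eq by auto. rewrite Rabs_Ropp.
    eapply Rle_trans. apply Rmult_le_compat_l; [auto|]. apply rsum_abs.
    rewrite <- rsum_scal. apply rsum_le; intros k Hk. rewrite Rabs_mult. right; ring. }
  transitivity (rsum K (fun k => Rabs (af K n1 d alpha w u xi r k) * Bf)).
  - rewrite rsum3_swap. apply rsum_le; intros k Hk.
    rewrite (rsum2_scal P Q (Rabs (af K n1 d alpha w u xi r k))).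
    apply Rmult_le_compat_l; [apply Rabs_pos|]. apply Hf; auto.
  - rewrite rsum_scal_r. apply Rmult_le_compat_r; auto.
    apply af_sum; auto.
Qed.

Lemma avg_bound n P Q (T : nat -> nat -> nat -> R) (base : nat -> R) (v : nat -> nat -> R) B eps :
  (0 < n)%nat -> 0 <= B -> 0 <= eps ->
  (forall l m, (l < P)%nat -> (m < Q)%nat -> 0 <= v l m) ->
  (forall i, (i < n)%nat -> 0 <= base i) ->
  (forall i, (i < n)%nat -> rsum P (fun l => rsum Q (fun m => v l m * Rabs (T l m i))) <= B * base i) ->
  rsum P (fun l => rsum Q (fun m => v l m * Rabs (/ INR n * rsum n (fun i => T l m i))))
   <= B * (/ INR n * rsum n base + eps).
Proof.
  intros Hn HB He Hv Hb HT.
  assert (Hinv : 0 < / INR n) by (apply Rinv_0_lt_compat, lt_0_INR; auto).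
  eapply Rle_trans.
  { apply (rsum2_le P Q _ (fun l m => / INR n * rsum n (fun i => v l m * Rabs (T l m i)))).
    intros l m Hl Hm. rewrite Rabs_mult, (Rabs_right (/ INR n)) by lra.
    rewrite rsum_scal. specialize (Hv l m Hl Hm).
    replace (v l m * (/ INR n * Rabs (rsum n (fun i => T l m i)))) with (/ INR n * (v l m * Rabs (rsum n (fun i => T l m i)))) by ring.
    apply Rmult_le_compat_l; [lra|]. apply Rmult_le_compat_l; auto. apply rsum_abs. }
  rewrite rsum2_scal. rewrite rsum3_swap.
  assert (H0 : 0 <= / INR n * rsum n base) by (apply Rmult_le_pos; [lra| apply rsum_nonneg; auto]).
  replace (B * (/ INR n * rsum n base + eps)) with (/ INR n * (rsum n (fun i => B * base i)) + B * eps)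
    by (rewrite rsum_scal; ring).
  assert (0 <= B * eps) by (apply Rmult_le_pos; auto).
  enough (/ INR n * rsum n (fun i => rsum P (fun l => rsum Q (fun m => v l m * Rabs (T l m i)))) <=
     / INR n * rsum n (fun i => B * base i)) by lra.
  apply Rmult_le_compat_l; [lra|]. apply rsum_le; auto.
Qed.

Lemma zf_nonneg n1 d u xi l : posU n1 d u -> (forall m, (m < d)%nat -> 0 <= xi m) -> (l < n1)%nat -> 0 <= zf d u xi l.
Proof. intros. unfold zf. apply rsum_nonneg; intros. apply Rmult_le_pos; auto. left; apply H; auto. Qed.

Lemma hf_nonneg d alpha u xi l : 0 <= hf d alpha u xi l.
Proof. apply rpow_nonneg. Qed.

Lemma h1f_nonneg d alpha u xi l : 0 <= alpha l -> 0 <= h1f d alpha u xi l.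
Proof. intros. unfold h1f. apply Rmult_le_pos; auto. apply rpow_nonneg. Qed.

Lemma h2f_nonneg d alpha u xi l : 1 <= alpha l -> 0 <= h2f d alpha u xi l.
Proof. intros. unfold h2f. apply Rmult_le_pos; [lra|]. apply Rmult_le_pos; [lra|]. apply rpow_nonneg. Qed.

Lemma h1_z d alpha u xi l : 0 <= zf d u xi l -> h1f d alpha u xi l * zf d u xi l = alpha l * hf d alpha u xi l.
Proof.
  intros Hz. unfold h1f, hf. destruct Hz as [Hz|Hz].
  - rewrite !rpow_pos_eq by auto. rewrite Rpower_minus1 by auto. field. lra.
  - rewrite <- Hz. rewrite !rpow_0. ring.
Qed.

Lemma h2_z d alpha u xi l : 0 <= zf d u xi l -> h2f d alpha u xi l * zf d u xi l = (alpha l - 1) * h1f d alpha u xi l.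
Proof.
  intros Hz. unfold h2f, h1f. destruct Hz as [Hz|Hz].
  - rewrite !rpow_pos_eq by auto. rewrite (Rpower_minus1 _ (alpha l - 1)) by auto. field. lra.
  - rewrite <- Hz. rewrite !rpow_0. ring.
Qed.

Definition dW_w (k l : nat) : nat -> nat -> R := fun r l' => dlt r k * dlt l' l.
Definition dU_u (l m : nat) : nat -> nat -> R := fun l' m' => dlt l' l * dlt m' m.
Definition d0 : nat -> nat -> R := fun _ _ => 0.

Lemma zdf_d0 d xi l : zdf d d0 xi l = 0.
Proof. apply zdf_0. Qed.

Lemma zdf_U d xi l m a : (m < d)%nat -> zdf d (dU_u l m) xi a = dlt a l * xi m.
Proof.
  intros. unfold zdf, dU_u. rewrite (rsum_ext d _ (fun m' => (dlt a l * xi m') * dlt m' m)) by (intros; ring).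
  apply rsum_dlt'; auto.
Qed.

Lemma hdf_d0 d alpha u xi a : hdf d alpha u d0 xi a = 0.
Proof. unfold hdf. rewrite zdf_d0; ring. Qed.

Lemma h1df_d0 d alpha u xi a : h1df d alpha u d0 xi a = 0.
Proof. unfold h1df. rewrite zdf_d0; ring. Qed.

Lemma fdf_W n1 d alpha w u xi k l k' : (l < n1)%nat ->
  fdf n1 d alpha w u (dW_w k l) d0 xi k' = dlt k' k * hf d alpha u xi l.
Proof.
  intros. unfold fdf, dW_w. rewrite (rsum_ext n1 _ (fun l' => (dlt k' k * hf d alpha u xi l') * dlt l' l)).
  - apply rsum_dlt'; auto.
  - intros. rewrite hdf_d0. ring.
Qed.

Lemma fdf_U n1 d alpha w u xi l m k' : (l < n1)%nat -> (m < d)%nat ->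
  fdf n1 d alpha w u d0 (dU_u l m) xi k' = w k' l * h1f d alpha u xi l * xi m.
Proof.
  intros. unfold fdf, d0, hdf. rewrite (rsum_ext n1 _ (fun l' => (w k' l' * h1f d alpha u xi l' * xi m) * dlt l' l)).
  - apply rsum_dlt'; auto.
  - intros. rewrite zdf_U by auto. ring.
Qed.

Definition HypData (n K n1 d : nat) (x : nat -> nat -> R) (y : nat -> nat) (alpha : nat -> R) : Prop :=
  (0 < n)%nat /\ (forall i m, (i < n)%nat -> (m < d)%nat -> 0 <= x i m) /\
  (forall i, (i < n)%nat -> (y i < K)%nat) /\ (forall l, (l < n1)%nat -> 1 <= alpha l).

Lemma fW_bound n K n1 d (x : nat -> nat -> R) (alpha : nat -> R) (w u : nat -> nat -> R) k Cw i :
  (k < K)%nat -> (i < n)%nat -> posW K n1 w -> fr n1 d alpha w u k (x i) <= Cw -> 0 <= Cw ->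
  forall k', (k' < K)%nat ->
  rsum n1 (fun l => rsum 1 (fun m => w k l * Rabs (fdf n1 d alpha w u (dW_w k l) d0 (x i) k'))) <= Cw.
Proof.
  intros Hk Hi Hw Hf HC k' Hk'.
  eapply Rle_trans; [|apply Hf]. rewrite fr_eq. apply rsum_le; intros l Hl.
  rewrite rsum_one. rewrite fdf_W by auto. rewrite Rabs_mult.
  rewrite (Rabs_right (hf _ _ _ _ _)) by (apply Rle_ge, hf_nonneg).
  apply Rmult_le_compat_l; [left; apply Hw; auto|].
  unfold dlt. destruct (Nat.eqb k' k); rewrite ?Rabs_R1, ?Rabs_R0; pose proof (hf_nonneg d alpha u (x i) l); lra.
Qed.

Lemma fU_bound n K n1 d x y alpha (w u : nat -> nat -> R) Cu i :
  HypData n K n1 d x y alpha -> (i < n)%nat -> posW K n1 w -> posU n1 d u ->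
  (forall k, (k < K)%nat -> rsum n1 (fun l => w k l * (alpha l * hf d alpha u (x i) l)) <= Cu) ->
  forall k', (k' < K)%nat ->
  rsum n1 (fun l => rsum d (fun m => u l m * Rabs (fdf n1 d alpha w u d0 (dU_u l m) (x i) k'))) <= Cu.
Proof.
  intros [Hn [Hx [Hy Ha]]] Hi Hw Hu HC k' Hk'.
  eapply Rle_trans; [|apply (HC k' Hk')]. right. apply rsum_ext; intros l Hl.
  rewrite (rsum_ext d _ (fun m => (w k' l * h1f d alpha u (x i) l) * (u l m * x i m))).
  - rewrite rsum_scal. fold (zf d u (x i) l). rewrite Rmult_assoc. rewrite h1_z.
    + ring.
    + apply (zf_nonneg n1); auto.
  - intros m Hm. rewrite fdf_U by auto.
    assert (0 <= w k' l * h1f d alpha u (x i) l * x i m).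
    { apply Rmult_le_pos; [apply Rmult_le_pos|]; [left; apply Hw; auto| apply h1f_nonneg; specialize (Ha l Hl); lra| auto]. }
    rewrite Rabs_right by lra. ring.
Qed.

Lemma bound_WW n K n1 d x y alpha eps (w u : nat -> nat -> R) i k a Cw :
  HypData n K n1 d x y alpha -> 0 < eps -> posW K n1 w -> posU n1 d u ->
  (i < K)%nat -> (k < K)%nat -> (a < n1)%nat -> 0 <= Cw ->
  (forall i', (i' < n)%nat -> fr n1 d alpha w u k (x i') <= Cw) ->
  rsum n1 (fun l => rsum 1 (fun m => w k l * Rabs (/ INR n * rsum n (fun i' =>
     cdf K n1 d alpha w u (dW_w k l) d0 (x i') i * hf d alpha u (x i') a
     + cf K n1 d alpha w u (x i') (y i') i * hdf d alpha u d0 (x i') a))))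
  <= (2 * Cw) * gWf n K n1 d x y alpha eps w u i a.
Proof.
  intros HD He Hw Hu Hi Hk Ha HC Hf. destruct HD as [Hn [Hx [Hy Hal]]].
  unfold gWf.
  apply (avg_bound n n1 1 (fun l m i' => cdf K n1 d alpha w u (dW_w k l) d0 (x i') i * hf d alpha u (x i') a
     + cf K n1 d alpha w u (x i') (y i') i * hdf d alpha u d0 (x i') a)
     (fun i' => cf K n1 d alpha w u (x i') (y i') i * hf d alpha u (x i') a) (fun l m => w k l)); auto; try lra.
  - intros; left; apply Hw; auto.
  - intros. apply Rmult_le_pos; [apply cf_nonneg; auto| apply hf_nonneg].
  - intros i' Hi'.
    eapply Rle_trans.
    { apply (rsum2_le n1 1 _ (fun l m => (w k l * Rabs (cdf K n1 d alpha w u (dW_w k l) d0 (x i') i)) * hf d alpha u (x i') a)).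
      intros l m Hl Hm. rewrite hdf_d0, Rmult_0_r, Rplus_0_r. rewrite Rabs_mult.
      rewrite (Rabs_right (hf _ _ _ _ _)) by (apply Rle_ge, hf_nonneg). right; ring. }
    rewrite (rsum_ext n1 _ (fun l => rsum 1 (fun m => w k l * Rabs (cdf K n1 d alpha w u (dW_w k l) d0 (x i') i)) * hf d alpha u (x i') a))
      by (intros; apply rsum_scal_r).
    rewrite rsum_scal_r.
    replace (2 * Cw * (cf K n1 d alpha w u (x i') (y i') i * hf d alpha u (x i') a))
      with ((2 * cf K n1 d alpha w u (x i') (y i') i * Cw) * hf d alpha u (x i') a) by ring.
    apply Rmult_le_compat_r; [apply hf_nonneg|].
    apply (cdf_wbound K n1 d alpha w u (x i') (y i') i n1 1 (fun l m => dW_w k l) (fun l m => d0) (fun l m => w k l) Cw); auto.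
    + intros; left; apply Hw; auto.
    + intros k' Hk'. apply (fW_bound n K n1 d x alpha w u k Cw i'); auto.
Qed.

Lemma omax_some N (f : nat -> R) : (0 < N)%nat -> exists v, omax N (fun _ => true) f = Some v.
Proof.
  induction N; intros; [lia|]. simpl. destruct (omax N (fun _ => true) f); eauto.
Qed.

Lemma omax_ge N (f : nat -> R) l : (l < N)%nat -> f l <= odflt0 (omax N (fun _ => true) f).
Proof.
  induction N; intros Hl; [lia|]. simpl.
  destruct (Nat.eq_dec l N).
  - subst. destruct (omax N (fun _ => true) f); simpl; [apply Rmax_r| lra].
  - specialize (IHN ltac:(lia)). destruct (omax_some N f ltac:(lia)) as [v Hv]. rewrite Hv in *. simpl in *.
    eapply Rle_trans; [apply IHN| apply Rmax_l].
Qed.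

Lemma alpha_le_ninf n1 alpha l : (l < n1)%nat -> 1 <= alpha l -> alpha l <= ninf n1 alpha.
Proof.
  intros. unfold ninf. eapply Rle_trans; [|apply (omax_ge n1 (fun l => Rabs (alpha l)) l H)].
  rewrite Rabs_right by lra. lra.
Qed.

Lemma ninf_ge1 n1 alpha l : (l < n1)%nat -> 1 <= alpha l -> 1 <= ninf n1 alpha.
Proof. intros. pose proof (alpha_le_ninf n1 alpha l H H0). lra. Qed.

Lemma hdf_U_sum n1 d alpha u xi a : posU n1 d u -> (forall m, (m < d)%nat -> 0 <= xi m) -> (a < n1)%nat ->
  0 <= alpha a ->
  rsum n1 (fun l => rsum d (fun m => u l m * Rabs (hdf d alpha u (dU_u l m) xi a))) = alpha a * hf d alpha u xi a.
Proof.
  intros Hu Hx Ha Hal. rewrite <- h1_z by (apply (zf_nonneg n1); auto).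
  rewrite (rsum_ext n1 _ (fun l => (h1f d alpha u xi a * zf d u xi l) * dlt a l)).
  - rewrite (rsum_ext n1 _ (fun l => (h1f d alpha u xi a * zf d u xi l) * dlt l a)).
    + apply rsum_dlt'; auto.
    + intros; unfold dlt; rewrite Nat.eqb_sym; auto.
  - intros l Hl. unfold zf. rewrite <- rsum_scal. rewrite <- rsum_scal_r. apply rsum_ext; intros m Hm.
    unfold hdf. rewrite zdf_U by auto.
    assert (0 <= h1f d alpha u xi a) by (apply h1f_nonneg; auto).
    assert (0 <= dlt a l) by (unfold dlt; destruct (Nat.eqb a l); lra).
    assert (0 <= u l m) by (left; apply Hu; auto).
    rewrite Rabs_right. ring. apply Rle_ge. specialize (Hx m Hm).
    apply Rmult_le_pos; auto. apply Rmult_le_pos; auto.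
Qed.

Lemma bound_WU n K n1 d x y alpha eps (w u : nat -> nat -> R) i a Cu :
  HypData n K n1 d x y alpha -> 0 < eps -> posW K n1 w -> posU n1 d u ->
  (i < K)%nat -> (a < n1)%nat -> 0 <= Cu ->
  (forall i' k, (i' < n)%nat -> (k < K)%nat -> rsum n1 (fun l => w k l * (alpha l * hf d alpha u (x i') l)) <= Cu) ->
  rsum n1 (fun l => rsum d (fun m => u l m * Rabs (/ INR n * rsum n (fun i' =>
     cdf K n1 d alpha w u d0 (dU_u l m) (x i') i * hf d alpha u (x i') a
     + cf K n1 d alpha w u (x i') (y i') i * hdf d alpha u (dU_u l m) (x i') a))))
  <= (2 * Cu + ninf n1 alpha) * gWf n K n1 d x y alpha eps w u i a.
Proof.
  intros HD He Hw Hu Hi Ha HC Hf. pose proof HD as HD'. destruct HD as [Hn [Hx [Hy Hal]]].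
  assert (Hni := ninf_ge1 n1 alpha a Ha (Hal a Ha)).
  unfold gWf.
  apply (avg_bound n n1 d (fun l m i' => cdf K n1 d alpha w u d0 (dU_u l m) (x i') i * hf d alpha u (x i') a
     + cf K n1 d alpha w u (x i') (y i') i * hdf d alpha u (dU_u l m) (x i') a)
     (fun i' => cf K n1 d alpha w u (x i') (y i') i * hf d alpha u (x i') a) (fun l m => u l m)); auto; try lra.
  - intros; left; apply Hu; auto.
  - intros. apply Rmult_le_pos; [apply cf_nonneg; auto| apply hf_nonneg].
  - intros i' Hi'.
    assert (Hc := cf_nonneg K n1 d alpha w u (x i') (y i') i Hi).
    eapply Rle_trans.
    { apply (rsum2_le n1 d _ (fun l m => (u l m * Rabs (cdf K n1 d alpha w u d0 (dU_u l m) (x i') i)) * hf d alpha u (x i') a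
          + cf K n1 d alpha w u (x i') (y i') i * (u l m * Rabs (hdf d alpha u (dU_u l m) (x i') a)))).
      intros l m Hl Hm. assert (0 <= u l m) by (left; apply Hu; auto).
      eapply Rle_trans. apply Rmult_le_compat_l; auto. apply Rabs_triang.
      rewrite !Rabs_mult. rewrite (Rabs_right (hf _ _ _ _ _)) by (apply Rle_ge, hf_nonneg).
      rewrite (Rabs_right (cf _ _ _ _ _ _ _ _ _)) by lra. right; ring. }
    rewrite rsum2_plus. rewrite rsum2_scal.
    rewrite hdf_U_sum by (auto; specialize (Hal a Ha); lra).
    rewrite (rsum_ext n1 _ (fun l => rsum d (fun m => u l m * Rabs (cdf K n1 d alpha w u d0 (dU_u l m) (x i') i)) * hf d alpha u (x i') a))
      by (intros; apply rsum_scal_r).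
    rewrite rsum_scal_r.
    assert (Hcd : rsum n1 (fun l => rsum d (fun m => u l m * Rabs (cdf K n1 d alpha w u d0 (dU_u l m) (x i') i)))
                  <= 2 * cf K n1 d alpha w u (x i') (y i') i * Cu).
    { apply (cdf_wbound K n1 d alpha w u (x i') (y i') i n1 d (fun l m => d0) (fun l m => dU_u l m) (fun l m => u l m) Cu); auto.
      + intros; left; apply Hu; auto.
      + intros k' Hk'. apply (fU_bound n K n1 d x y alpha w u Cu i'); auto. }
    pose proof (hf_nonneg d alpha u (x i') a) as Hh.
    pose proof (alpha_le_ninf n1 alpha a Ha (Hal a Ha)).
    assert (rsum n1 (fun l => rsum d (fun m => u l m * Rabs (cdf K n1 d alpha w u d0 (dU_u l m) (x i') i))) * hf d alpha u (x i') a
       <= 2 * cf K n1 d alpha w u (x i') (y i') i * Cu * hf d alpha u (x i') a) by (apply Rmult_le_compat_r; auto).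
    assert (cf K n1 d alpha w u (x i') (y i') i * (alpha a * hf d alpha u (x i') a) <=
       cf K n1 d alpha w u (x i') (y i') i * (ninf n1 alpha * hf d alpha u (x i') a)).
    { apply Rmult_le_compat_l; auto. apply Rmult_le_compat_r; auto. }
    nra.
Qed.

Lemma rsum_Q1 P (f : nat -> nat -> R) : rsum P (fun l => rsum 1 (fun m => f l m)) = rsum P (fun l => f l 0%nat).
Proof. apply rsum_ext; intros; apply rsum_one. Qed.

Lemma dlt_nonneg a b : 0 <= dlt a b.
Proof. unfold dlt; destruct (Nat.eqb a b); lra. Qed.

Lemma dlt_sym a b : dlt a b = dlt b a.
Proof. unfold dlt; rewrite Nat.eqb_sym; auto. Qed.

Lemma bound_UW n K n1 d x y alpha eps (w u : nat -> nat -> R) k a b Cw :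
  HypData n K n1 d x y alpha -> 0 < eps -> posW K n1 w -> posU n1 d u ->
  (k < K)%nat -> (a < n1)%nat -> (b < d)%nat -> 0 <= Cw ->
  (forall i', (i' < n)%nat -> fr n1 d alpha w u k (x i') <= Cw) ->
  rsum n1 (fun l => rsum 1 (fun m => w k l * Rabs (/ INR n * rsum n (fun i' =>
     (rsum K (fun r => cdf K n1 d alpha w u (dW_w k l) d0 (x i') r * w r a
                      + cf K n1 d alpha w u (x i') (y i') r * dW_w k l r a)
        * h1f d alpha u (x i') a
      + rsum K (fun r => cf K n1 d alpha w u (x i') (y i') r * w r a)
        * h1df d alpha u d0 (x i') a) * x i' b))))
  <= (2 * Cw + 1) * gUf n K n1 d x y alpha eps w u a b.
Proof.
  intros HD He Hw Hu Hk Ha Hb HC Hf. destruct HD as [Hn [Hx [Hy Hal]]].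
  unfold gUf.
  apply (avg_bound n n1 1 _
     (fun i' => rsum K (fun r => cf K n1 d alpha w u (x i') (y i') r * w r a) * h1f d alpha u (x i') a * x i' b)
     (fun l m => w k l)); auto; try lra.
  - intros; left; apply Hw; auto.
  - intros i' Hi'. apply Rmult_le_pos; [apply Rmult_le_pos|]; auto.
    + apply rsum_nonneg; intros r Hr. apply Rmult_le_pos; [apply cf_nonneg; auto| left; apply Hw; auto].
    + apply h1f_nonneg. specialize (Hal a Ha); lra.
  - intros i' Hi'.
    set (c := fun r => cf K n1 d alpha w u (x i') (y i') r).
    set (h1 := h1f d alpha u (x i') a).
    assert (Hh1 : 0 <= h1) by (apply h1f_nonneg; specialize (Hal a Ha); lra).
    assert (Hxb : 0 <= x i' b) by auto.
    assert (Hc : forall r, (r < K)%nat -> 0 <= c r) by (intros; apply cf_nonneg; auto).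
    rewrite rsum_Q1.
    eapply Rle_trans.
    { apply (rsum_le n1 _ (fun l => rsum K (fun r => w r a * (w k l * Rabs (cdf K n1 d alpha w u (dW_w k l) d0 (x i') r))
                + c r * (w k l * Rabs (dW_w k l r a))) * (h1 * x i' b))).
      intros l Hl. rewrite h1df_d0, Rmult_0_r, Rplus_0_r. fold h1.
      assert (Hwl : 0 <= w k l) by (left; apply Hw; auto).
      set (S := rsum K (fun r => cdf K n1 d alpha w u (dW_w k l) d0 (x i') r * w r a + c r * dW_w k l r a)).
      assert (HS : Rabs S <= rsum K (fun r => w r a * Rabs (cdf K n1 d alpha w u (dW_w k l) d0 (x i') r)
                + c r * Rabs (dW_w k l r a))).
      { unfold S. eapply Rle_trans. apply rsum_abs. apply rsum_le; intros r Hr.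
        eapply Rle_trans. apply Rabs_triang. rewrite !Rabs_mult.
        rewrite (Rabs_right (w r a)) by (left; apply Hw; auto).
        rewrite (Rabs_right (c r)) by (apply Rle_ge; apply (Hc r); auto). right; ring. }
      replace (w k l * Rabs (S * h1 * x i' b)) with ((w k l * Rabs S) * (h1 * x i' b))
        by (rewrite !Rabs_mult, (Rabs_right h1), (Rabs_right (x i' b)) by lra; ring).
      replace (rsum K (fun r => w r a * (w k l * Rabs (cdf K n1 d alpha w u (dW_w k l) d0 (x i') r))
                + c r * (w k l * Rabs (dW_w k l r a))) * (h1 * x i' b))
        with ((w k l * rsum K (fun r => w r a * Rabs (cdf K n1 d alpha w u (dW_w k l) d0 (x i') r)
                + c r * Rabs (dW_w k l r a))) * (h1 * x i' b))
        by (rewrite <- rsum_scal; f_equal; apply rsum_ext; intros; ring).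
      apply Rmult_le_compat_r; [apply Rmult_le_pos; auto|].
      apply Rmult_le_compat_l; auto. }
    rewrite rsum_scal_r.
    replace ((2 * Cw + 1) * (rsum K (fun r => c r * w r a) * h1 * x i' b))
      with ((2 * Cw + 1) * rsum K (fun r => c r * w r a) * (h1 * x i' b)) by ring.
    apply Rmult_le_compat_r; [apply Rmult_le_pos; auto|].
    rewrite rsum_swap.
    rewrite (rsum_ext K _ (fun r => rsum n1 (fun l => w r a * (w k l * Rabs (cdf K n1 d alpha w u (dW_w k l) d0 (x i') r)))
       + rsum n1 (fun l => c r * (w k l * Rabs (dW_w k l r a))))) by (intros; apply rsum_plus).
    rewrite rsum_plus.
    assert (H1 : rsum K (fun r => rsum n1 (fun l => w r a * (w k l * Rabs (cdf K n1 d alpha w u (dW_w k l) d0 (x i') r))))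
                 <= rsum K (fun r => 2 * Cw * (c r * w r a))).
    { apply rsum_le; intros r Hr. rewrite rsum_scal.
      assert (Hb1 : rsum n1 (fun l => rsum 1 (fun m => w k l * Rabs (cdf K n1 d alpha w u (dW_w k l) d0 (x i') r)))
                  <= 2 * c r * Cw).
      { apply (cdf_wbound K n1 d alpha w u (x i') (y i') r n1 1 (fun l m => dW_w k l) (fun l m => d0) (fun l m => w k l) Cw); auto.
        + intros; left; apply Hw; auto.
        + intros k' Hk'. apply (fW_bound n K n1 d x alpha w u k Cw i'); auto. }
      rewrite rsum_Q1 in Hb1. assert (0 < w r a) by (apply Hw; auto).
      replace (2 * Cw * (c r * w r a)) with (w r a * (2 * c r * Cw)) by ring.
      apply Rmult_le_compat_l; lra. }
    assert (H2 : rsum K (fun r => rsum n1 (fun l => c r * (w k l * Rabs (dW_w k l r a))))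
                 <= rsum K (fun r => c r * w r a)).
    { rewrite (rsum_ext K _ (fun r => (c r * w k a) * dlt r k)).
      - rewrite rsum_dlt' by auto. apply (rsum_single_ge K (fun r => c r * w r a) k); auto.
        intros; apply Rmult_le_pos; auto. left; apply Hw; auto.
      - intros r Hr. rewrite rsum_scal.
        rewrite (rsum_ext n1 _ (fun l => (w k l * dlt r k) * dlt l a)).
        + rewrite rsum_dlt' by auto. ring.
        + intros l Hl. unfold dW_w. rewrite Rabs_mult, !Rabs_right by (apply Rle_ge, dlt_nonneg).
          rewrite (dlt_sym a l). ring. }
    rewrite Rmult_plus_distr_r, Rmult_1_l. rewrite <- (rsum_scal K (2 * Cw)). lra.
Qed.

Lemma zdf_U_sum n1 d u xi a (H : R) : posU n1 d u -> (forall m, (m < d)%nat -> 0 <= xi m) -> (a < n1)%nat ->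
  0 <= H ->
  rsum n1 (fun l => rsum d (fun m => u l m * Rabs (H * zdf d (dU_u l m) xi a))) = H * zf d u xi a.
Proof.
  intros Hu Hx Ha HH.
  rewrite (rsum_ext n1 _ (fun l => (H * zf d u xi l) * dlt l a)).
  - apply rsum_dlt'; auto.
  - intros l Hl. unfold zf. rewrite <- rsum_scal. rewrite <- rsum_scal_r. apply rsum_ext; intros m Hm.
    rewrite zdf_U by auto. rewrite (dlt_sym a l).
    assert (0 <= dlt l a) by apply dlt_nonneg.
    assert (0 <= u l m) by (left; apply Hu; auto).
    rewrite Rabs_right. ring. apply Rle_ge. specialize (Hx m Hm).
    apply Rmult_le_pos; auto. apply Rmult_le_pos; auto.
Qed.

Lemma bound_UU n K n1 d x y alpha eps (w u : nat -> nat -> R) a b Cu :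
  HypData n K n1 d x y alpha -> 0 < eps -> posW K n1 w -> posU n1 d u ->
  (a < n1)%nat -> (b < d)%nat -> 0 <= Cu ->
  (forall i' k, (i' < n)%nat -> (k < K)%nat -> rsum n1 (fun l => w k l * (alpha l * hf d alpha u (x i') l)) <= Cu) ->
  rsum n1 (fun l => rsum d (fun m => u l m * Rabs (/ INR n * rsum n (fun i' =>
     (rsum K (fun r => cdf K n1 d alpha w u d0 (dU_u l m) (x i') r * w r a
                      + cf K n1 d alpha w u (x i') (y i') r * d0 r a)
        * h1f d alpha u (x i') a
      + rsum K (fun r => cf K n1 d alpha w u (x i') (y i') r * w r a)
        * h1df d alpha u (dU_u l m) (x i') a) * x i' b))))
  <= (2 * Cu + ninf n1 alpha - 1) * gUf n K n1 d x y alpha eps w u a b.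
Proof.
  intros HD He Hw Hu Ha Hb HC Hf. pose proof HD as HD'. destruct HD as [Hn [Hx [Hy Hal]]].
  assert (Hni := alpha_le_ninf n1 alpha a Ha (Hal a Ha)).
  assert (Ha1 := Hal a Ha).
  unfold gUf.
  apply (avg_bound n n1 d _
     (fun i' => rsum K (fun r => cf K n1 d alpha w u (x i') (y i') r * w r a) * h1f d alpha u (x i') a * x i' b)
     (fun l m => u l m)); auto; try lra.
  - intros; left; apply Hu; auto.
  - intros i' Hi'. apply Rmult_le_pos; [apply Rmult_le_pos|]; auto.
    + apply rsum_nonneg; intros r Hr. apply Rmult_le_pos; [apply cf_nonneg; auto| left; apply Hw; auto].
    + apply h1f_nonneg. lra.
  - intros i' Hi'.
    set (c := fun r => cf K n1 d alpha w u (x i') (y i') r).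
    set (h1 := h1f d alpha u (x i') a).
    set (Sc := rsum K (fun r => c r * w r a)).
    assert (Hh1 : 0 <= h1) by (apply h1f_nonneg; lra).
    assert (Hxb : 0 <= x i' b) by auto.
    assert (Hc : forall r, (r < K)%nat -> 0 <= c r) by (intros; apply cf_nonneg; auto).
    assert (HSc : 0 <= Sc) by (apply rsum_nonneg; intros; apply Rmult_le_pos; [apply Hc; auto| left; apply Hw; auto]).
    eapply Rle_trans.
    { apply (rsum2_le n1 d _ (fun l m => rsum K (fun r => w r a * (u l m * Rabs (cdf K n1 d alpha w u d0 (dU_u l m) (x i') r))) * (h1 * x i' b)
                + Sc * (u l m * Rabs (h2f d alpha u (x i') a * zdf d (dU_u l m) (x i') a)) * x i' b)).
      intros l m Hl Hm.
      assert (Hul : 0 <= u l m) by (left; apply Hu; auto).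
      set (S := rsum K (fun r => cdf K n1 d alpha w u d0 (dU_u l m) (x i') r * w r a + c r * d0 r a)).
      assert (HS : Rabs S <= rsum K (fun r => w r a * Rabs (cdf K n1 d alpha w u d0 (dU_u l m) (x i') r))).
      { unfold S. eapply Rle_trans. apply rsum_abs. apply rsum_le; intros r Hr.
        unfold d0. rewrite Rmult_0_r, Rplus_0_r. rewrite Rabs_mult.
        rewrite (Rabs_right (w r a)) by (left; apply Hw; auto). right; ring. }
      eapply Rle_trans. apply Rmult_le_compat_l; auto. rewrite Rabs_mult. apply Rmult_le_compat_r; [apply Rabs_pos|]. apply Rabs_triang.
      rewrite (Rabs_right (x i' b)) by lra. rewrite !Rabs_mult. rewrite (Rabs_right h1) by lra.
      rewrite (Rabs_right Sc) by lra. unfold h1df.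
      assert (Hk1 : u l m * (Rabs S * h1) <= rsum K (fun r => w r a * (u l m * Rabs (cdf K n1 d alpha w u d0 (dU_u l m) (x i') r))) * h1).
      { rewrite (rsum_ext K _ (fun r => u l m * (w r a * Rabs (cdf K n1 d alpha w u d0 (dU_u l m) (x i') r)))) by (intros; ring).
        rewrite rsum_scal. rewrite <- Rmult_assoc. apply Rmult_le_compat_r; auto. apply Rmult_le_compat_l; auto. }
      rewrite (Rabs_mult (h2f d alpha u (x i') a) (zdf d (dU_u l m) (x i') a)).
      set (B2 := Rabs (h2f d alpha u (x i') a) * Rabs (zdf d (dU_u l m) (x i') a)).
      replace (u l m * ((Rabs S * h1 + Sc * B2) * x i' b)) with ((u l m * (Rabs S * h1)) * x i' b + Sc * (u l m * B2) * x i' b) by ring.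
      apply Rplus_le_compat_r. eapply Rle_trans; [apply Rmult_le_compat_r; [exact Hxb| exact Hk1]| right; ring]. }
    rewrite rsum2_plus.
    rewrite (rsum_ext n1 _ (fun l => rsum d (fun m => rsum K (fun r => w r a * (u l m * Rabs (cdf K n1 d alpha w u d0 (dU_u l m) (x i') r)))) * (h1 * x i' b)))
      by (intros; apply rsum_scal_r).
    rewrite rsum_scal_r.
    rewrite (rsum_ext n1 (fun l => rsum d (fun m => Sc * (u l m * Rabs (h2f d alpha u (x i') a * zdf d (dU_u l m) (x i') a)) * x i' b))
       (fun l => rsum d (fun m => (Sc * x i' b) * (u l m * Rabs (h2f d alpha u (x i') a * zdf d (dU_u l m) (x i') a)))))
      by (intros; apply rsum_ext; intros; ring).
    rewrite rsum2_scal. rewrite zdf_U_sum by (auto; apply h2f_nonneg; auto).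
    rewrite h2_z by (apply (zf_nonneg n1); auto). fold h1.
    rewrite rsum3_swap.
    assert (H1 : rsum K (fun r => rsum n1 (fun l => rsum d (fun m => w r a * (u l m * Rabs (cdf K n1 d alpha w u d0 (dU_u l m) (x i') r)))))
                 <= 2 * Cu * Sc).
    { unfold Sc. rewrite <- rsum_scal. apply rsum_le; intros r Hr. rewrite rsum2_scal.
      assert (Hb1 : rsum n1 (fun l => rsum d (fun m => u l m * Rabs (cdf K n1 d alpha w u d0 (dU_u l m) (x i') r)))
                  <= 2 * c r * Cu).
      { apply (cdf_wbound K n1 d alpha w u (x i') (y i') r n1 d (fun l m => d0) (fun l m => dU_u l m) (fun l m => u l m) Cu); auto.
        + intros; left; apply Hu; auto.
        + intros k' Hk'. apply (fU_bound n K n1 d x y alpha w u Cu i'); auto. }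
      assert (0 < w r a) by (apply Hw; auto).
      replace (2 * Cu * (c r * w r a)) with (w r a * (2 * c r * Cu)) by ring.
      apply Rmult_le_compat_l; lra. }
    assert (0 <= h1 * x i' b) by (apply Rmult_le_pos; auto).
    assert (H2 : (Sc * x i' b) * ((alpha a - 1) * h1) <= (ninf n1 alpha - 1) * (Sc * h1 * x i' b)).
    { replace ((Sc * x i' b) * ((alpha a - 1) * h1)) with ((alpha a - 1) * (Sc * h1 * x i' b)) by ring.
      apply Rmult_le_compat_r; [|lra]. apply Rmult_le_pos; [apply Rmult_le_pos|]; auto. }
    assert (H3 : rsum K (fun r => rsum n1 (fun l => rsum d (fun m => w r a * (u l m * Rabs (cdf K n1 d alpha w u d0 (dU_u l m) (x i') r))))) * (h1 * x i' b)
                 <= 2 * Cu * Sc * (h1 * x i' b)) by (apply Rmult_le_compat_r; auto).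
    replace ((2 * Cu + ninf n1 alpha - 1) * (Sc * h1 * x i' b)) with (2 * Cu * Sc * (h1 * x i' b) + (ninf n1 alpha - 1) * (Sc * h1 * x i' b)) by ring.
    lra.
Qed.

Lemma exp_le x y : x <= y -> exp x <= exp y.
Proof. intros [H|H]; [left; apply exp_increasing; auto| subst; lra]. Qed.

Lemma ln_nonpos b : 0 < b -> b <= 1 -> ln b <= 0.
Proof. intros H1 [H2|H2]. left; rewrite <- ln_1; apply ln_increasing; auto. subst; rewrite ln_1; lra. Qed.

Lemma ln_pos' b : 1 < b -> 0 < ln b.
Proof. intros. rewrite <- ln_1; apply ln_increasing; lra. Qed.

Lemma rpow_mult a b c : 0 <= a -> 0 <= b -> rpow (a * b) c = rpow a c * rpow b c.
Proof.
  intros [Ha|Ha] [Hb|Hb]; try (subst; rewrite ?Rmult_0_l, ?Rmult_0_r, !rpow_0; ring).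
  rewrite !rpow_pos_eq by (try apply Rmult_lt_0_compat; auto). rewrite Rpower_mult_distr; auto.
Qed.

Lemma rpow_rpow a c1 c2 : 0 <= a -> rpow (rpow a c1) c2 = rpow a (c1 * c2).
Proof.
  intros [Ha|Ha]; [|subst; rewrite !rpow_0; auto].
  rewrite (rpow_pos_eq a c1) by auto. rewrite rpow_pos_eq by apply Rpower_pos.
  rewrite rpow_pos_eq by auto. apply Rpower_mult.
Qed.

Lemma rpow_1 a : 0 <= a -> rpow a 1 = a.
Proof. intros [Ha|Ha]; [rewrite rpow_pos_eq, Rpower_1; auto| subst; apply rpow_0]. Qed.

Lemma rpow_inv_r a c : 0 <= a -> c <> 0 -> rpow (rpow a (/ c)) c = a.
Proof. intros. rewrite rpow_rpow by auto. rewrite Rinv_l by auto. apply rpow_1; auto. Qed.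

Lemma rpow_inv_l a c : 0 <= a -> c <> 0 -> rpow (rpow a c) (/ c) = a.
Proof. intros. rewrite rpow_rpow by auto. rewrite Rinv_r by auto. apply rpow_1; auto. Qed.

Lemma rpow_le_base a b c : 0 <= a -> a <= b -> 0 <= c -> rpow a c <= rpow b c.
Proof.
  intros [Ha|Ha] Hab Hc.
  - rewrite !rpow_pos_eq by lra. apply Rle_Rpower_l; auto.
  - subst. rewrite rpow_0. apply rpow_nonneg.
Qed.

Lemma rpow_le_exp b c1 c2 : 0 <= b -> b <= 1 -> c1 <= c2 -> rpow b c2 <= rpow b c1.
Proof.
  intros [Hb|Hb] Hb1 Hc; [|subst; rewrite !rpow_0; lra].
  rewrite !rpow_pos_eq by auto. unfold Rpower. apply exp_le.
  pose proof (ln_nonpos b Hb Hb1). nra.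
Qed.

Lemma rpow_le1 b c : 0 <= b -> b <= 1 -> 0 <= c -> rpow b c <= 1.
Proof.
  intros [Hb|Hb] Hb1 Hc; [|subst; rewrite rpow_0; lra].
  rewrite rpow_pos_eq by auto. unfold Rpower. rewrite <- exp_0. apply exp_le.
  pose proof (ln_nonpos b Hb Hb1). nra.
Qed.

Lemma rpow_gt1 b c : 1 < b -> 0 < c -> 1 < rpow b c.
Proof.
  intros. rewrite rpow_pos_eq by lra. unfold Rpower. rewrite <- exp_0. apply exp_increasing.
  pose proof (ln_pos' b H). nra.
Qed.

Lemma rpow_le_inv a b c : 0 <= a -> 0 <= b -> 0 < c -> rpow a c <= rpow b c -> a <= b.
Proof.
  intros Ha Hb Hc H. destruct (Rle_lt_dec a b); auto.
  assert (rpow b c < rpow a c).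
  { destruct Hb as [Hb|Hb].
    - rewrite !rpow_pos_eq by lra. apply Rlt_Rpower_l; auto.
    - subst. rewrite rpow_0. rewrite rpow_pos_eq by lra. apply Rpower_pos. }
  lra.
Qed.

Lemma rpow_zero_iff a c : 0 <= a -> rpow a c = 0 -> a = 0.
Proof.
  intros [Ha|Ha] H; auto. rewrite rpow_pos_eq in H by auto. pose proof (Rpower_pos a c). lra.
Qed.

Lemma rpow_inv_base a c : 0 < a -> rpow (/ a) c = / rpow a c.
Proof.
  intros Ha. rewrite !rpow_pos_eq by (try apply Rinv_0_lt_compat; auto).
  unfold Rpower. rewrite ln_Rinv by auto. rewrite <- exp_Ropp. f_equal; ring.
Qed.

Lemma exp_convex lam s t : 0 <= lam <= 1 ->
  exp (lam * s + (1 - lam) * t) <= lam * exp s + (1 - lam) * exp t.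
Proof.
  intros Hl. set (m := lam * s + (1 - lam) * t).
  assert (Hs : exp m * (1 + (s - m)) <= exp s).
  { replace (exp s) with (exp m * exp (s - m)) by (rewrite <- exp_plus; f_equal; ring).
    apply Rmult_le_compat_l; [left; apply exp_pos| apply exp_ineq1_le]. }
  assert (Ht : exp m * (1 + (t - m)) <= exp t).
  { replace (exp t) with (exp m * exp (t - m)) by (rewrite <- exp_plus; f_equal; ring).
    apply Rmult_le_compat_l; [left; apply exp_pos| apply exp_ineq1_le]. }
  assert (E : lam * (exp m * (1 + (s - m))) + (1 - lam) * (exp m * (1 + (t - m))) = exp m) by (unfold m; ring).
  destruct Hl. nra.
Qed.

Lemma young x y P : 0 <= x -> 0 <= y -> 1 < P ->
  x * y <= rpow x P / P + rpow y (conj P) / conj P.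
Proof.
  intros Hx Hy HP. assert (HQ := conj_gt1 P HP).
  assert (H0 : 0 <= rpow x P / P + rpow y (conj P) / conj P).
  { apply Rplus_le_le_0_compat; apply Rmult_le_pos; try apply rpow_nonneg; left; apply Rinv_0_lt_compat; lra. }
  destruct Hx as [Hx|Hx]; [|subst; lra]. destruct Hy as [Hy|Hy]; [|subst; lra].
  rewrite !rpow_pos_eq by auto. unfold Rpower.
  assert (Hl : / P + / conj P = 1) by (unfold conj; field; lra).
  pose proof (exp_convex (/ P) (P * ln x) (conj P * ln y)) as Hc.
  replace (1 - / P) with (/ conj P) in Hc by lra.
  replace (/ P * (P * ln x) + / conj P * (conj P * ln y)) with (ln x + ln y) in Hc by (field; lra).
  rewrite exp_plus, !exp_ln in Hc by auto.
  replace (exp (P * ln x) / P + exp (conj P * ln y) / conj P) with (/ P * exp (P * ln x) + / conj P * exp (conj P * ln y)) by (unfold Rdiv; ring).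
  apply Hc. split. left; apply Rinv_0_lt_compat; lra. rewrite <- (Rinv_1). apply Rinv_le_contravar; lra.
Qed.

Lemma rsum_zero_each N f : (forall i, (i < N)%nat -> 0 <= f i) -> rsum N f = 0 -> forall i, (i < N)%nat -> f i = 0.
Proof. intros H E i Hi. pose proof (rsum_single_ge N f i Hi H). specialize (H i Hi). lra. Qed.

Lemma rpow_div_scale a al P : 0 <= a -> 0 < al -> rpow (a / al) P = rpow a P / rpow al P.
Proof.
  intros Ha Hal. unfold Rdiv. rewrite rpow_mult by (auto; left; apply Rinv_0_lt_compat; auto).
  rewrite rpow_inv_base; auto.
Qed.

Lemma holder N P (a b : nat -> R) : 1 < P ->
  (forall i, (i < N)%nat -> 0 <= a i) -> (forall i, (i < N)%nat -> 0 <= b i) ->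
  rsum N (fun i => a i * b i) <=
  rpow (rsum N (fun i => rpow (a i) P)) (/ P) * rpow (rsum N (fun i => rpow (b i) (conj P))) (/ conj P).
Proof.
  intros HP Ha Hb. assert (HQ := conj_gt1 P HP). set (Q := conj P) in *.
  set (A := rsum N (fun i => rpow (a i) P)). set (B := rsum N (fun i => rpow (b i) Q)).
  assert (HA : 0 <= A) by (apply rsum_nonneg; intros; apply rpow_nonneg).
  assert (HB : 0 <= B) by (apply rsum_nonneg; intros; apply rpow_nonneg).
  assert (HR : 0 <= rpow A (/ P) * rpow B (/ Q)) by (apply Rmult_le_pos; apply rpow_nonneg).
  destruct HA as [HA|HA].
  2:{ rewrite (rsum_ext N _ (fun _ => 0)). rewrite rsum_zero; auto.
      intros i Hi. assert (E := rsum_zero_each N (fun i => rpow (a i) P) (fun i _ => rpow_nonneg _ _) (eq_sym HA) i Hi).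
      apply rpow_zero_iff in E; auto. simpl in E. rewrite E; ring. }
  destruct HB as [HB|HB].
  2:{ rewrite (rsum_ext N _ (fun _ => 0)). rewrite rsum_zero; auto.
      intros i Hi. assert (E := rsum_zero_each N (fun i => rpow (b i) Q) (fun i _ => rpow_nonneg _ _) (eq_sym HB) i Hi).
      apply rpow_zero_iff in E; auto. simpl in E. rewrite E; ring. }
  set (al := rpow A (/ P)). set (be := rpow B (/ Q)).
  assert (Hal : 0 < al) by (unfold al; rewrite rpow_pos_eq by auto; apply Rpower_pos).
  assert (Hbe : 0 < be) by (unfold be; rewrite rpow_pos_eq by auto; apply Rpower_pos).
  assert (HalP : rpow al P = A) by (unfold al; apply rpow_inv_r; lra).
  assert (HbeQ : rpow be Q = B) by (unfold be; apply rpow_inv_r; lra).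
  assert (Hy : forall i, (i < N)%nat -> (a i / al) * (b i / be) <= rpow (a i) P / (A * P) + rpow (b i) Q / (B * Q)).
  { intros i Hi. eapply Rle_trans. apply (young (a i / al) (b i / be) P); auto.
    - apply Rmult_le_pos; auto. left; apply Rinv_0_lt_compat; auto.
    - apply Rmult_le_pos; auto. left; apply Rinv_0_lt_compat; auto.
    - fold Q. rewrite !rpow_div_scale by auto. rewrite HalP, HbeQ. right; field. repeat split; lra. }
  assert (Hs : rsum N (fun i => (a i / al) * (b i / be)) <= 1).
  { eapply Rle_trans. apply rsum_le. exact Hy.
    rewrite rsum_plus. unfold Rdiv. rewrite !rsum_scal_r. fold A B.
    replace (A * / (A * P) + B * / (B * Q)) with (/ P + / Q) by (field; lra).
    unfold Q, conj. right; field. lra. }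
  rewrite (rsum_ext N _ (fun i => (a i / al) * (b i / be) * (al * be))) by (intros; field; lra).
  rewrite rsum_scal_r. fold al be. assert (0 < al * be) by (apply Rmult_lt_0_compat; auto). nra.
Qed.

Lemma omax_notnone N (P : nat -> bool) (f : nat -> R) l : (l < N)%nat -> P l = true -> omax N P f <> None.
Proof.
  induction N; intros Hl HP E; [lia|]. simpl in E.
  destruct (Nat.eq_dec l N).
  - subst. rewrite HP in E. destruct (omax N P f); discriminate.
  - destruct (P N); destruct (omax N P f) eqn:E2; try discriminate. apply (IHN ltac:(lia) HP); auto.
Qed.

Lemma omin_notnone N (P : nat -> bool) (f : nat -> R) l : (l < N)%nat -> P l = true -> omin N P f <> None.
Proof.
  induction N; intros Hl HP E; [lia|]. simpl in E.
  destruct (Nat.eq_dec l N).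
  - subst. rewrite HP in E. destruct (omin N P f); discriminate.
  - destruct (P N); destruct (omin N P f) eqn:E2; try discriminate. apply (IHN ltac:(lia) HP); auto.
Qed.

Lemma omax_ge_P N (P : nat -> bool) (f : nat -> R) l : (l < N)%nat -> P l = true -> f l <= odflt0 (omax N P f).
Proof.
  induction N; intros Hl HP; [lia|]. simpl.
  destruct (Nat.eq_dec l N).
  - subst. rewrite HP. destruct (omax N P f); simpl; [apply Rmax_r| lra].
  - specialize (IHN ltac:(lia) HP). pose proof (omax_notnone N P f l ltac:(lia) HP).
    destruct (P N); destruct (omax N P f) eqn:E; simpl in *; auto; try congruence.
    eapply Rle_trans; [apply IHN| apply Rmax_l].
Qed.

Lemma omax_nonneg N P (f : nat -> R) : (forall l, 0 <= f l) -> 0 <= odflt0 (omax N P f).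
Proof.
  intros Hf. induction N; simpl; [lra|].
  destruct (P N); destruct (omax N P f); simpl in *; auto.
  eapply Rle_trans; [apply IHN| apply Rmax_l].
Qed.

Lemma omin_some N P (f : nat -> R) m : omin N P f = Some m ->
  (forall l, (l < N)%nat -> P l = true -> m <= f l) /\ (exists l, (l < N)%nat /\ P l = true /\ f l = m).
Proof.
  revert m. induction N; intros m E; simpl in E; [discriminate|].
  destruct (P N) eqn:HPN; destruct (omin N P f) eqn:E2.
  - inversion E; subst. destruct (IHN r eq_refl) as [H1 [l0 [Hl0 [HP0 Hf0]]]]. split.
    + intros l Hl HPl. destruct (Nat.eq_dec l N). subst; apply Rmin_r.
      eapply Rle_trans; [apply Rmin_l| apply H1; auto; lia].
    + destruct (Rle_dec r (f N)).
      * exists l0; split; [lia| split; [auto| rewrite Hf0, Rmin_left; auto]].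
      * exists N; split; [lia| split; [auto| rewrite Rmin_right; auto; lra]].
  - inversion E; subst. split.
    + intros l Hl HPl. destruct (Nat.eq_dec l N). subst; lra.
      exfalso. apply (omin_notnone N P f l ltac:(lia) HPl); auto.
    + exists N; repeat split; auto.
  - destruct (IHN m E) as [H1 H2]. split.
    + intros l Hl HPl. destruct (Nat.eq_dec l N). subst; congruence. apply H1; auto; lia.
    + destruct H2 as [l0 [? [? ?]]]. exists l0; repeat split; auto.
  - discriminate.
Qed.

Lemma omin_none N P (f : nat -> R) : omin N P f = None -> forall l, (l < N)%nat -> P l = false.
Proof.
  induction N; intros E l Hl; [lia|]. simpl in E.
  destruct (P N) eqn:HPN; destruct (omin N P f) eqn:E2; try discriminate.
  destruct (Nat.eq_dec l N). subst; auto. apply IHN; auto; lia.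
Qed.

Lemma psi_core n1 alpha p q (delta : nat -> R) t (bb : nat -> R) :
  1 < p -> 1 < q -> 0 <= t -> (forall l, (l < n1)%nat -> 1 <= alpha l) ->
  (forall l, (l < n1)%nat -> 0 <= delta l) -> (forall l, (l < n1)%nat -> 0 <= bb l) ->
  rsum n1 (fun l => rpow (bb l) q) <= 1 ->
  rpow (rsum n1 (fun l => rpow (delta l * rpow t (alpha l) * rpow (bb l) (alpha l)) p)) (/ p)
   <= PsiA n1 alpha p q delta t.
Proof.
  intros Hp Hq Ht Hal Hd Hbb Hsum.
  set (J := inJ alpha p q).
  set (c := fun l => delta l * rpow t (alpha l)).
  assert (Hc : forall l, (l < n1)%nat -> 0 <= c l) by (intros; unfold c; apply Rmult_le_pos; [auto| apply rpow_nonneg]).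
  assert (Hb1 : forall l, (l < n1)%nat -> bb l <= 1).
  { intros l Hl. destruct (Rle_dec (bb l) 1); auto. exfalso.
    assert (1 < rpow (bb l) q) by (apply rpow_gt1; lra).
    pose proof (rsum_single_ge n1 (fun l => rpow (bb l) q) l Hl (fun _ _ => rpow_nonneg _ _)). simpl in H0. lra. }
  assert (HX : forall l, (l < n1)%nat ->
     rpow (delta l * rpow t (alpha l) * rpow (bb l) (alpha l)) p = rpow (c l) p * rpow (bb l) (alpha l * p)).
  { intros l Hl. fold (c l). rewrite rpow_mult by (auto; apply rpow_nonneg). rewrite rpow_rpow by auto. auto. }
  set (T2 := odflt0 (omax n1 (fun l => negb (J l)) (fun j => rpow (delta j * rpow t (alpha j)) p))).
  assert (HT2 : 0 <= T2) by (apply omax_nonneg; intros; apply rpow_nonneg).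
  set (T1 := match omin n1 J alpha with
             | None => 0
             | Some ab => rpow (rsum n1 (fun l => if J l then rpow (delta l * rpow t (alpha l)) (p * q / (q - ab * p)) else 0))
                   (1 - ab * p / q) end).
  assert (HT1 : 0 <= T1) by (unfold T1; destruct (omin n1 J alpha); [apply rpow_nonneg| lra]).
  assert (HPsi : PsiA n1 alpha p q delta t = rpow (T1 + T2) (/ p)) by reflexivity.
  rewrite HPsi. apply rpow_le_base.
  { apply rsum_nonneg; intros; apply rpow_nonneg. }
  2:{ left; apply Rinv_0_lt_compat; lra. }
  rewrite (rsum_ext n1 _ (fun l => (if J l then rpow (c l) p * rpow (bb l) (alpha l * p) else 0)
                                 + (if J l then 0 else rpow (c l) p * rpow (bb l) (alpha l * p))))
    by (intros l Hl; rewrite HX by auto; destruct (J l); ring).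
  rewrite rsum_plus. apply Rplus_le_compat.
  -
    unfold T1. destruct (omin n1 J alpha) as [ab|] eqn:Eab.
    + destruct (omin_some n1 J alpha ab Eab) as [Hmin [l0 [Hl0 [HJ0 Hab]]]].
      assert (Hab1 : 1 <= ab) by (rewrite <- Hab; auto).
      assert (Habq : ab * p < q).
      { rewrite <- Hab. unfold J, inJ in HJ0. destruct (Rlt_dec (alpha l0 * p) q); auto; discriminate. }
      set (r := q / (ab * p)).
      assert (Hr : 1 < r).
      { unfold r. apply (Rmult_lt_reg_r (ab * p)); [nra|]. field_simplify; nra. }
      eapply Rle_trans.
      { apply (rsum_le n1 _ (fun l => (if J l then rpow (bb l) (ab * p) else 0) * (if J l then rpow (c l) p else 0))).
        intros l Hl. destruct (J l) eqn:HJl; [|lra].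
        rewrite (Rmult_comm (rpow (c l) p)). apply Rmult_le_compat_r; [apply rpow_nonneg|].
        apply rpow_le_exp; auto. pose proof (Hmin l Hl HJl). nra. }
      eapply Rle_trans.
      { apply (holder n1 r); auto.
        - intros l Hl; destruct (J l); [apply rpow_nonneg| lra].
        - intros l Hl; destruct (J l); [apply rpow_nonneg| lra]. }
      replace (rpow (rsum n1 (fun l => if J l then rpow (delta l * rpow t (alpha l)) (p * q / (q - ab * p)) else 0)) (1 - ab * p / q))
        with (1 * rpow (rsum n1 (fun i => rpow (if J i then rpow (c i) p else 0) (conj r))) (/ conj r)).
      * apply Rmult_le_compat_r; [apply rpow_nonneg|].
        apply rpow_le1.
        -- apply rsum_nonneg; intros; apply rpow_nonneg.
        -- eapply Rle_trans; [|apply Hsum]. apply rsum_le; intros l Hl. destruct (J l).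
           ++ rewrite rpow_rpow by auto. right. f_equal. unfold r. field. nra.
           ++ rewrite rpow_0. apply rpow_nonneg.
        -- left; apply Rinv_0_lt_compat; lra.
      * rewrite Rmult_1_l.
        assert (Hcr : conj r = q / (q - ab * p)) by (unfold conj, r; field; split; nra).
        assert (Hicr : / conj r = 1 - ab * p / q) by (rewrite Hcr; field; split; nra).
        rewrite Hicr. f_equal. apply rsum_ext; intros l Hl. destruct (J l).
        -- rewrite rpow_rpow by auto. f_equal. rewrite Hcr. field. nra.
        -- apply rpow_0.
    + rewrite (rsum_ext n1 _ (fun _ => 0)). rewrite rsum_zero; lra.
      intros l Hl. rewrite (omin_none n1 J alpha Eab l Hl). auto.
  -
    eapply Rle_trans.
    { apply (rsum_le n1 _ (fun l => T2 * (if J l then 0 else rpow (bb l) q))).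
      intros l Hl. destruct (J l) eqn:HJl; [lra|].
      apply Rmult_le_compat; [apply rpow_nonneg| apply rpow_nonneg| |].
      - unfold T2, c. apply (omax_ge_P n1 (fun l => negb (J l)) (fun j => rpow (delta j * rpow t (alpha j)) p) l Hl).
        rewrite HJl; auto.
      - apply rpow_le_exp; auto. unfold J, inJ in HJl. destruct (Rlt_dec (alpha l * p) q); [discriminate| lra]. }
    rewrite rsum_scal.
    assert (0 <= rsum n1 (fun l => if J l then 0 else rpow (bb l) q)) by (apply rsum_nonneg; intros; destruct (J i); [lra| apply rpow_nonneg]).
    assert (rsum n1 (fun l => if J l then 0 else rpow (bb l) q) <= 1).
    { eapply Rle_trans; [|apply Hsum]. apply rsum_le; intros l Hl. destruct (J l); [apply rpow_nonneg| lra]. }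
    nra.
Qed.

Lemma assemble N M P Q p rho (Gp : nat -> nat -> R -> nat -> nat -> R) (dGp : nat -> nat -> nat -> nat -> R)
  (t0p : nat -> nat -> R) (g : nat -> nat -> R) (v : nat -> nat -> R) (Fexp : nat -> nat -> R -> R) j1 j2 B :
  1 < p -> 0 < rho -> 0 <= B -> (j1 < N)%nat -> (j2 < M)%nat ->
  (forall a b, (a < N)%nat -> (b < M)%nat -> 0 < g a b) ->
  (forall l m, (l < P)%nat -> (m < Q)%nat -> 0 < t0p l m) ->
  (forall l m, (l < P)%nat -> (m < Q)%nat -> forall t, 0 < t -> forall a b, (a < N)%nat -> (b < M)%nat -> 0 < Gp l m t a b) ->
  (forall l m, (l < P)%nat -> (m < Q)%nat -> forall a b, (a < N)%nat -> (b < M)%nat ->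
       derivable_pt_lim (fun t => Gp l m t a b) (t0p l m) (dGp l m a b)) ->
  (forall l m, (l < P)%nat -> (m < Q)%nat -> Gp l m (t0p l m) = g) ->
  (forall l m, (l < P)%nat -> (m < Q)%nat -> forall t, 0 < t ->
       Fexp l m t = rho * psi (conj p) (Gp l m t j1 j2) / pnorm_mat N M p (fun a b => psi (conj p) (Gp l m t a b))) ->
  (forall l m, (l < P)%nat -> (m < Q)%nat -> 0 <= v l m) ->
  (forall a b, (a < N)%nat -> (b < M)%nat ->
     rsum P (fun l => rsum Q (fun m => v l m * Rabs (dGp l m a b))) <= B * g a b) ->
  rsum P (fun l => rsum Q (fun m => Rabs (Deriv (Fexp l m) (t0p l m)) * v l m))
   <= 2 * (conj p - 1) * B * (rho * psi (conj p) (g j1 j2) / pnorm_mat N M p (fun a b => psi (conj p) (g a b))).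
Proof.
  intros Hp Hrho HB H1 H2 Hgpos Ht0 HGpos Hder Hg HF Hv Hbd.
  assert (Hc1 := conj_gt1 p Hp).
  set (F0 := rho * psi (conj p) (g j1 j2) / pnorm_mat N M p (fun a b => psi (conj p) (g a b))).
  assert (HF0 : 0 <= F0).
  { unfold F0. rewrite psi_pos by auto. rewrite pnorm_mat_pos_eq with (j1 := j1) (j2 := j2) by auto.
    left. apply Rdiv_lt_0_compat; [apply Rmult_lt_0_compat; auto; apply Rpower_pos| apply Rpower_pos]. }
  rewrite (rsum2_le P Q _ (fun l m => Rabs (F0 * (conj p - 1) * (dGp l m j1 j2 / g j1 j2
       - rsum N (fun a => rsum M (fun b => piN N M (conj p) g a b * (dGp l m a b / g a b))))) * v l m)).
  - apply combine; auto. lra.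
  - intros l m Hl Hm. right. f_equal. f_equal. apply Deriv_eq.
    apply (dl_local (fun t => rho * psi (conj p) (Gp l m t j1 j2) / pnorm_mat N M p (fun a b => psi (conj p) (Gp l m t a b))) _ _ _ (t0p l m)).
    + apply Ht0; auto.
    + intros t Ht. assert (0 < t) by (apply Rabs_def2 in Ht; lra). rewrite HF; auto.
    + pose proof (norm_deriv N M p rho (Gp l m) (dGp l m) (t0p l m) j1 j2 Hp (Ht0 l m Hl Hm) H1 H2
         (HGpos l m Hl Hm) (Hder l m Hl Hm)) as ND.
      rewrite (Hg l m Hl Hm) in ND. exact ND.
Qed.

Lemma pnorm_vec_mat N p (v : nat -> R) : pnorm_vec N p v = pnorm_mat N 1 p (fun a _ => v a).
Proof. unfold pnorm_vec, pnorm_mat. f_equal. apply rsum_ext; intros. rewrite rsum_one; auto. Qed.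

Lemma pnorm_mat_ext N M p (v v' : nat -> nat -> R) : (forall a b, (a < N)%nat -> (b < M)%nat -> v a b = v' a b) ->
  pnorm_mat N M p v = pnorm_mat N M p v'.
Proof. intros. unfold pnorm_mat. f_equal. apply rsum_ext; intros. apply rsum_ext; intros. rewrite H; auto. Qed.

Lemma posU_upd2 n1 d u l m t : posU n1 d u -> 0 < t -> posU n1 d (upd2 u l m t).
Proof. intros Hu Ht a b Ha Hb. unfold upd2. destruct (Nat.eqb a l && Nat.eqb b m)%bool; auto. Qed.

Lemma posW_upd2 K n1 w k l t : posW K n1 w -> 0 < t -> posW K n1 (upd2 w k l t).
Proof. intros Hw Ht a b Ha Hb. unfold upd2. destruct (Nat.eqb a k && Nat.eqb b l)%bool; auto. Qed.

Lemma GW_eq n K n1 d x y alpha eps pw rhow i j w u :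
  HypData n K n1 d x y alpha -> posU n1 d u -> (i < K)%nat -> (j < n1)%nat ->
  GW (Phi n K n1 d x y alpha eps) n1 pw rhow i j w u =
  rhow * psi (conj pw) (gWf n K n1 d x y alpha eps w u i j) /
    pnorm_mat n1 1 pw (fun a b => psi (conj pw) (gWf n K n1 d x y alpha eps w u i a)).
Proof.
  intros [Hn [Hx [Hy Hal]]] Hu Hi Hj. unfold GW.
  rewrite gradW_eq by auto. rewrite pnorm_vec_mat. f_equal. apply pnorm_mat_ext; intros.
  rewrite gradW_eq; auto.
Qed.

Lemma GU_eq n K n1 d x y alpha eps pu rhou a b w u :
  HypData n K n1 d x y alpha -> posU n1 d u -> (a < n1)%nat -> (b < d)%nat ->
  GU (Phi n K n1 d x y alpha eps) n1 d pu rhou a b w u =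
  rhou * psi (conj pu) (gUf n K n1 d x y alpha eps w u a b) /
    pnorm_mat n1 d pu (fun a' b' => psi (conj pu) (gUf n K n1 d x y alpha eps w u a' b')).
Proof.
  intros [Hn [Hx [Hy Hal]]] Hu Ha Hb. unfold GU.
  rewrite gradU_eq by auto. f_equal. apply pnorm_mat_ext; intros.
  rewrite gradU_eq; auto.
Qed.

Lemma gWf_pos n K n1 d x y alpha eps w u r l :
  HypData n K n1 d x y alpha -> 0 < eps -> (r < K)%nat -> 0 < gWf n K n1 d x y alpha eps w u r l.
Proof.
  intros [Hn [Hx [Hy Hal]]] He Hr. unfold gWf.
  assert (0 <= / INR n * rsum n (fun i => cf K n1 d alpha w u (x i) (y i) r * hf d alpha u (x i) l)).
  { apply Rmult_le_pos. left; apply Rinv_0_lt_compat, lt_0_INR; auto.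
    apply rsum_nonneg; intros. apply Rmult_le_pos; [apply cf_nonneg; auto| apply hf_nonneg]. }
  lra.
Qed.

Lemma gUf_pos n K n1 d x y alpha eps w u a b :
  HypData n K n1 d x y alpha -> 0 < eps -> posW K n1 w -> (a < n1)%nat -> (b < d)%nat ->
  0 < gUf n K n1 d x y alpha eps w u a b.
Proof.
  intros [Hn [Hx [Hy Hal]]] He Hw Ha Hb. unfold gUf.
  assert (0 <= / INR n * rsum n (fun i => rsum K (fun r => cf K n1 d alpha w u (x i) (y i) r * w r a)
       * h1f d alpha u (x i) a * x i b)).
  { apply Rmult_le_pos. left; apply Rinv_0_lt_compat, lt_0_INR; auto.
    apply rsum_nonneg; intros. apply Rmult_le_pos; [apply Rmult_le_pos|]; auto.
    - apply rsum_nonneg; intros. apply Rmult_le_pos; [apply cf_nonneg; auto| left; apply Hw; auto].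
    - apply h1f_nonneg. specialize (Hal a Ha); lra. }
  lra.
Qed.

Lemma psi_bound n n1 d (x : nat -> nat -> R) (alpha : nat -> R) pw pu rhow rhou K (w u : nat -> nat -> R) i' k (delta : nat -> R) :
  (forall i m, (i < n)%nat -> (m < d)%nat -> 0 <= x i m) ->
  (forall l, (l < n1)%nat -> 1 <= alpha l) -> 1 < pw -> 1 < pu -> 0 < rhow -> 0 < rhou ->
  inBpp K n1 d pw pu rhow rhou w u -> (i' < n)%nat -> (k < K)%nat ->
  (forall l, (l < n1)%nat -> 0 <= delta l) ->
  rsum n1 (fun l => w k l * (delta l * hf d alpha u (x i') l)) <=
  rhow * PsiA n1 alpha (conj pw) pu delta (rhou * rho_x n d x pu).
Proof.
  intros Hx Hal Hpw Hpu Hrw Hru [Hw [Hu [Hun Hwn]]] Hi Hk Hd.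
  change (posW K n1 w) in Hw. change (posU n1 d u) in Hu.
  set (q := pu). set (p := conj pw).
  assert (Hp : 1 < p) by (apply conj_gt1; auto).
  assert (Hq' := conj_gt1 pu Hpu).
  set (rx := rho_x n d x pu).
  assert (Hrx : 0 <= rx) by (apply omax_nonneg; intros; apply rpow_nonneg).
  assert (Hxn : pnorm_vec d (conj pu) (x i') <= rx).
  { unfold rx, rho_x. apply (omax_ge n (fun i => pnorm_vec d (conj pu) (x i)) i'); auto. }
  set (al := fun l => rpow (rsum d (fun m => rpow (u l m) q)) (/ q)).
  assert (Hal0 : forall l, 0 <= al l) by (intros; apply rpow_nonneg).
  assert (H1 : forall l, (l < n1)%nat -> zf d u (x i') l <= al l * rx).
  { intros l Hl. unfold zf. eapply Rle_trans.
    { apply (holder d q (fun m => u l m) (fun m => x i' m)); auto. intros; left; apply Hu; auto. }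
    apply Rmult_le_compat_l; auto. eapply Rle_trans; [|apply Hxn]. right. unfold pnorm_vec.
    f_equal. apply rsum_ext; intros m Hm. rewrite Rabs_right; auto. apply Rle_ge; auto. }
  assert (H2 : rsum n1 (fun l => rpow (al l) q) <= rpow rhou q).
  { rewrite (rsum_ext n1 _ (fun l => rsum d (fun m => rpow (u l m) q))).
    - set (U := rsum n1 (fun l => rsum d (fun m => rpow (u l m) q))).
      assert (HU0 : 0 <= U) by (apply rsum_nonneg; intros; apply rsum_nonneg; intros; apply rpow_nonneg).
      assert (HUn : rpow U (/ q) <= rhou).
      { eapply Rle_trans; [|apply Hun]. right. unfold pnorm_mat. f_equal. unfold U.
        apply rsum_ext; intros; apply rsum_ext; intros. rewrite Rabs_right; auto. left; apply Hu; auto. }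
      rewrite <- (rpow_inv_r U q) by (auto; unfold q; lra).
      apply rpow_le_base; [apply rpow_nonneg| auto| unfold q; lra].
    - intros l Hl. unfold al. apply rpow_inv_r. apply rsum_nonneg; intros; apply rpow_nonneg. unfold q; lra. }
  set (bb := fun l => al l / rhou).
  assert (Hbb0 : forall l, 0 <= bb l) by (intros; unfold bb; apply Rmult_le_pos; auto; left; apply Rinv_0_lt_compat; auto).
  assert (Hbbs : rsum n1 (fun l => rpow (bb l) q) <= 1).
  { unfold bb. rewrite (rsum_ext n1 _ (fun l => rpow (al l) q * / rpow rhou q)).
    - rewrite rsum_scal_r. assert (0 < rpow rhou q) by (rewrite rpow_pos_eq by auto; apply Rpower_pos).
      apply (Rmult_le_reg_r (rpow rhou q)); auto. rewrite Rmult_assoc, Rinv_l by lra. lra.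
    - intros l Hl. rewrite rpow_div_scale by auto. auto. }
  set (t := rhou * rx).
  assert (Ht : 0 <= t) by (unfold t; apply Rmult_le_pos; lra).
  set (v := fun l => delta l * hf d alpha u (x i') l).
  assert (Hv0 : forall l, (l < n1)%nat -> 0 <= v l) by (intros; unfold v; apply Rmult_le_pos; [auto| apply hf_nonneg]).
  assert (H3 : forall l, (l < n1)%nat -> v l <= delta l * rpow t (alpha l) * rpow (bb l) (alpha l)).
  { intros l Hl. unfold v. rewrite Rmult_assoc. apply Rmult_le_compat_l; auto.
    rewrite <- rpow_mult by auto. unfold hf. apply rpow_le_base.
    - apply (zf_nonneg n1); auto.
    - eapply Rle_trans; [apply H1; auto|]. right. unfold t, bb. field. lra.
    - specialize (Hal l Hl); lra. }
  eapply Rle_trans.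
  { apply (holder n1 pw (fun l => w k l) v); auto. intros; left; apply Hw; auto. }
  apply Rmult_le_compat; [apply rpow_nonneg| apply rpow_nonneg| |].
  - eapply Rle_trans; [|apply (Hwn k Hk)]. right. unfold pnorm_vec. f_equal. apply rsum_ext; intros.
    rewrite Rabs_right; auto. left; apply Hw; auto.
  - fold p. eapply Rle_trans; [|apply (psi_core n1 alpha p q delta t bb); auto].
    apply rpow_le_base.
    + apply rsum_nonneg; intros; apply rpow_nonneg.
    + apply rsum_le; intros l Hl. apply rpow_le_base; auto. lra.
    + left; apply Rinv_0_lt_compat; lra.
Qed.

Lemma PsiA_nonneg n1 alpha p q delta t : 0 <= PsiA n1 alpha p q delta t.
Proof. unfold PsiA. apply rpow_nonneg. Qed.

Theorem mainTheorem12 (n K n1 d : nat) (x : nat -> nat -> R) (y : nat -> nat)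
  (alpha : nat -> R) (eps pw pu rhow rhou : R)
  (hn : (0 < n)%nat)
  (hx : forall i m, (i < n)%nat -> (m < d)%nat -> 0 <= x i m)
  (hy : forall i, (i < n)%nat -> (y i < K)%nat)
  (halpha : forall l, (l < n1)%nat -> 1 <= alpha l)
  (heps : 0 < eps) (hpw : 1 < pw) (hpu : 1 < pu) (hrw : 0 < rhow) (hru : 0 < rhou) :
  let Ph := Phi n K n1 d x y alpha eps in
  let rx := rho_x n d x pu in
  let Cw := rhow * PsiA n1 alpha (conj pw) pu (fun _ => 1) (rhou * rx) in
  let Cu := rhow * PsiA n1 alpha (conj pw) pu alpha (rhou * rx) in
  let A := Amat K pw pu Cw Cu (ninf n1 alpha) in
  forall (i k j a b : nat) (w u : nat -> nat -> R),
    (i < K)%nat -> (k < K)%nat -> (j < n1)%nat -> (a < n1)%nat -> (b < d)%nat ->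
    inBpp K n1 d pw pu rhow rhou w u ->
    let Fw := GW Ph n1 pw rhow i j in
    let Fu := GU Ph n1 d pu rhou a b in
    rsum n1 (fun l => Rabs (Deriv (fun t => Fw (upd2 w k l t) u) (w k l)) * w k l)
      <= A i k * Fw w u /\
    rsum n1 (fun l => rsum d (fun m =>
      Rabs (Deriv (fun t => Fw w (upd2 u l m t)) (u l m)) * u l m))
      <= A i K * Fw w u /\
    rsum n1 (fun l => Rabs (Deriv (fun t => Fu (upd2 w k l t) u) (w k l)) * w k l)
      <= A K k * Fu w u /\
    rsum n1 (fun l => rsum d (fun m =>
      Rabs (Deriv (fun t => Fu w (upd2 u l m t)) (u l m)) * u l m))
      <= A K K * Fu w u.
Proof.
  intros Ph rx Cw Cu A i k j a b w u Hi Hk Hj Ha Hb HB Fw Fu.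
  assert (HD : HypData n K n1 d x y alpha) by (repeat split; auto).
  assert (HB' := HB). destruct HB' as [Hw [Hu _]].
  change (posW K n1 w) in Hw. change (posU n1 d u) in Hu.
  assert (HCw0 : 0 <= Cw) by (unfold Cw; apply Rmult_le_pos; [lra| apply PsiA_nonneg]).
  assert (HCu0 : 0 <= Cu) by (unfold Cu; apply Rmult_le_pos; [lra| apply PsiA_nonneg]).
  assert (HCw : forall i' k', (i' < n)%nat -> (k' < K)%nat -> fr n1 d alpha w u k' (x i') <= Cw).
  { intros i' k' Hi' Hk'. rewrite fr_eq. unfold Cw, rx.
    eapply Rle_trans; [|apply (psi_bound n n1 d x alpha pw pu rhow rhou K w u i' k' (fun _ => 1)); auto; intros; lra].
    right. apply rsum_ext; intros; ring. }
  assert (HCu : forall i' k', (i' < n)%nat -> (k' < K)%nat ->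
            rsum n1 (fun l => w k' l * (alpha l * hf d alpha u (x i') l)) <= Cu).
  { intros i' k' Hi' Hk'. unfold Cu, rx.
    apply (psi_bound n n1 d x alpha pw pu rhow rhou K w u i' k' alpha); auto.
    intros l Hl; specialize (halpha l Hl); lra. }
  assert (Hni := ninf_ge1 n1 alpha a Ha (halpha a Ha)).
  assert (HAik : A i k = 2 * (conj pw - 1) * (2 * Cw)).
  { unfold A, Amat, Mmat. apply Nat.ltb_lt in Hi. apply Nat.ltb_lt in Hk. rewrite Hi, Hk. ring. }
  assert (HAiK : A i K = 2 * (conj pw - 1) * (2 * Cu + ninf n1 alpha)).
  { unfold A, Amat, Mmat. apply Nat.ltb_lt in Hi. rewrite Hi, Nat.ltb_irrefl. ring. }
  assert (HAKk : A K k = 2 * (conj pu - 1) * (2 * Cw + 1)).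
  { unfold A, Amat, Mmat. apply Nat.ltb_lt in Hk. rewrite Hk, Nat.ltb_irrefl. ring. }
  assert (HAKK : A K K = 2 * (conj pu - 1) * (2 * Cu + ninf n1 alpha - 1)).
  { unfold A, Amat, Mmat. rewrite Nat.ltb_irrefl. ring. }
  split; [|split; [|split]].
  -
    rewrite HAik. unfold Fw, Ph. rewrite GW_eq by auto.
    rewrite (rsum_ext n1 _ (fun l => rsum 1 (fun m =>
       Rabs (Deriv (fun t => GW (Phi n K n1 d x y alpha eps) n1 pw rhow i j (upd2 w k l t) u) (w k l)) * w k l)))
      by (intros; rewrite rsum_one; auto).
    apply (assemble n1 1 n1 1 pw rhow
      (fun l m t a' b' => gWf n K n1 d x y alpha eps (upd2 w k l t) u i a')
      (fun l m a' b' => / INR n * rsum n (fun i' =>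
         cdf K n1 d alpha w u (dW_w k l) d0 (x i') i * hf d alpha u (x i') a'
         + cf K n1 d alpha w u (x i') (y i') i * hdf d alpha u d0 (x i') a'))
      (fun l m => w k l) (fun a' b' => gWf n K n1 d x y alpha eps w u i a') (fun l m => w k l)
      (fun l m t => GW (Phi n K n1 d x y alpha eps) n1 pw rhow i j (upd2 w k l t) u) j 0%nat (2 * Cw)); auto; try lra.
    + intros; apply gWf_pos; auto.
    + intros; apply gWf_pos; auto.
    + intros l m Hl Hm a' b' Ha' Hb'. eapply dl_eq_val.
      * apply (D_gW n K n1 d x y alpha eps (fun t => upd2 w k l t) (fun _ => u) (dW_w k l) d0 (w k l) i a'); auto.
        -- intros; apply dl_upd2.
        -- intros; apply dl_const.
        -- intros; apply (zcond_of_pos n1); auto.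
      * rewrite upd2_same. reflexivity.
    + intros. rewrite upd2_same. reflexivity.
    + intros l m Hl Hm t Ht. apply GW_eq; auto.
    + intros; left; auto.
    + intros a' b' Ha' Hb'. apply bound_WW; auto.
  -
    rewrite HAiK. unfold Fw, Ph. rewrite GW_eq by auto.
    apply (assemble n1 1 n1 d pw rhow
      (fun l m t a' b' => gWf n K n1 d x y alpha eps w (upd2 u l m t) i a')
      (fun l m a' b' => / INR n * rsum n (fun i' =>
         cdf K n1 d alpha w u d0 (dU_u l m) (x i') i * hf d alpha u (x i') a'
         + cf K n1 d alpha w u (x i') (y i') i * hdf d alpha u (dU_u l m) (x i') a'))
      (fun l m => u l m) (fun a' b' => gWf n K n1 d x y alpha eps w u i a') (fun l m => u l m)
      (fun l m t => GW (Phi n K n1 d x y alpha eps) n1 pw rhow i j w (upd2 u l m t)) j 0%nat (2 * Cu + ninf n1 alpha)); auto; try lra.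
    + intros; apply gWf_pos; auto.
    + intros; apply gWf_pos; auto.
    + intros l m Hl Hm a' b' Ha' Hb'. eapply dl_eq_val.
      * apply (D_gW n K n1 d x y alpha eps (fun _ => w) (fun t => upd2 u l m t) d0 (dU_u l m) (u l m) i a'); auto.
        -- intros; apply dl_const.
        -- intros; apply dl_upd2.
        -- intros; rewrite upd2_same; apply (zcond_of_pos n1); auto.
      * rewrite upd2_same. reflexivity.
    + intros. rewrite upd2_same. reflexivity.
    + intros l m Hl Hm t Ht. apply GW_eq; auto. apply posU_upd2; auto.
    + intros; left; auto.
    + intros a' b' Ha' Hb'. apply bound_WU; auto.
  -
    rewrite HAKk. unfold Fu, Ph. rewrite GU_eq by auto.
    rewrite (rsum_ext n1 _ (fun l => rsum 1 (fun m =>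
       Rabs (Deriv (fun t => GU (Phi n K n1 d x y alpha eps) n1 d pu rhou a b (upd2 w k l t) u) (w k l)) * w k l)))
      by (intros; rewrite rsum_one; auto).
    apply (assemble n1 d n1 1 pu rhou
      (fun l m t a' b' => gUf n K n1 d x y alpha eps (upd2 w k l t) u a' b')
      (fun l m a' b' => / INR n * rsum n (fun i' =>
         (rsum K (fun r => cdf K n1 d alpha w u (dW_w k l) d0 (x i') r * w r a'
                      + cf K n1 d alpha w u (x i') (y i') r * dW_w k l r a')
           * h1f d alpha u (x i') a'
          + rsum K (fun r => cf K n1 d alpha w u (x i') (y i') r * w r a')
           * h1df d alpha u d0 (x i') a') * x i' b'))
      (fun l m => w k l) (fun a' b' => gUf n K n1 d x y alpha eps w u a' b') (fun l m => w k l)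
      (fun l m t => GU (Phi n K n1 d x y alpha eps) n1 d pu rhou a b (upd2 w k l t) u) a b (2 * Cw + 1)); auto; try lra.
    + intros; apply gUf_pos; auto.
    + intros; apply gUf_pos; auto. apply posW_upd2; auto.
    + intros l m Hl Hm a' b' Ha' Hb'. eapply dl_eq_val.
      * apply (D_gU n K n1 d x y alpha eps (fun t => upd2 w k l t) (fun _ => u) (dW_w k l) d0 (w k l) a' b'); auto.
        -- intros; apply dl_upd2.
        -- intros; apply dl_const.
        -- intros; apply (zcond_of_pos n1); auto.
      * rewrite upd2_same. reflexivity.
    + intros. rewrite upd2_same. reflexivity.
    + intros l m Hl Hm t Ht. apply GU_eq; auto.
    + intros; left; auto.
    + intros a' b' Ha' Hb'. apply bound_UW; auto.
  -
    rewrite HAKK. unfold Fu, Ph. rewrite GU_eq by auto.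
    apply (assemble n1 d n1 d pu rhou
      (fun l m t a' b' => gUf n K n1 d x y alpha eps w (upd2 u l m t) a' b')
      (fun l m a' b' => / INR n * rsum n (fun i' =>
         (rsum K (fun r => cdf K n1 d alpha w u d0 (dU_u l m) (x i') r * w r a'
                      + cf K n1 d alpha w u (x i') (y i') r * d0 r a')
           * h1f d alpha u (x i') a'
          + rsum K (fun r => cf K n1 d alpha w u (x i') (y i') r * w r a')
           * h1df d alpha u (dU_u l m) (x i') a') * x i' b'))
      (fun l m => u l m) (fun a' b' => gUf n K n1 d x y alpha eps w u a' b') (fun l m => u l m)
      (fun l m t => GU (Phi n K n1 d x y alpha eps) n1 d pu rhou a b w (upd2 u l m t)) a b (2 * Cu + ninf n1 alpha - 1)); auto; try lra.
    + intros; apply gUf_pos; auto.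
    + intros; apply gUf_pos; auto.
    + intros l m Hl Hm a' b' Ha' Hb'. eapply dl_eq_val.
      * apply (D_gU n K n1 d x y alpha eps (fun _ => w) (fun t => upd2 u l m t) d0 (dU_u l m) (u l m) a' b'); auto.
        -- intros; apply dl_const.
        -- intros; apply dl_upd2.
        -- intros; rewrite upd2_same; apply (zcond_of_pos n1); auto.
      * rewrite upd2_same. reflexivity.
    + intros. rewrite upd2_same. reflexivity.
    + intros l m Hl Hm t Ht. apply GU_eq; auto. apply posU_upd2; auto.
    + intros; left; auto.
    + intros a' b' Ha' Hb'. apply bound_UU; auto.
Qed.
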